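(* Let $G$ be a GP 2 host graph (node labels arbitrary lists) such that every node is marked grey, exactly one node $r$ is a root, every edge is unmarked and labelled with an integer (its weight), and there are no loops. Then the execution of the GP 2 program bellman-ford on $G$ terminates, and: if $G$ contains a directed cycle whose sum of edge labels is negative and which is reachable by a directed path from $r$, the program fails; otherwise it returns the graph obtained from $G$ by (1) appending to the label of each node $v$ reachable from $r$ by a directed path the minimum, over all directed paths from $r$ to $v$, of the sum of the edge labels along the path (this is $0$ for $v=r$), (2) appending the string ''f'' to the label of every other node, and (3) marking all edges blue.
   Context: GP 2 semantics. Host graphs are finite directed graphs whose nodes and edges carry labels (lists of integers and strings; ''x:s'' denotes the list x followed by the atom s) and marks (nodes: unmarked, red, green, blue, grey; edges: unmarked, red, green, blue, dashed); some nodes are roots. A rule (with typed variables, here list variables x,y and integer variables i,s,t,w) is applied by finding an injective match of its left-hand side compatible with labels (for some instantiation of variables of the right types) and marks (mark ''any'' matches every mark; roots match roots), satisfying the dangling condition (a left-hand node that is not kept must have no incident edges outside the match) and the rule's condition, then deleting/changing/adding items as prescribed by the right-hand side. Commands: a rule set call $\{r_1,\dots,r_k\}$ applies one applicable rule, failing if none applies; $P;Q$ sequencing (failure of $P$ or $Q$ makes $P;Q$ fail); $P!$ iterates $P$ until it fails, returning the graph on which $P$ was last entered; ''try $C$ then $P$ else $Q$'' runs $C$ and continues with $P$ on its result if it succeeded, else $Q$ on the original graph (missing branches do nothing); ''if $C$ then $P$ else $Q$'' runs $C$ on a copy then $P$ (if $C$ succeeded) or $Q$ on the original; fail causes failure.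 The program bellman-ford: Main = set_counter; count!; (decrement; Relax!; Clean!)!; Final Relax = root1; try no_deg else ((unmarked_edge; try {unvisited, reduce}; finish)!; unroot1) Clean = root2; unmark_edge!; unroot2 Final = (root1; (unmarked_edge; if reduce then set_flag; finish)!; unroot1)!; if flag then fail; delete_counter; no_deg_inv! Rules (edges directed from node 1 to node 2; labels unchanged unless stated): - set_counter(x): a grey root labelled x becomes a blue non-root labelled x:0; a new green non-root node labelled 0 is created, with a new dashed edge (empty label) from it to node 1. - count(x; i): a grey node 1 labelled x and a green node 2 labelled i; node 1 becomes blue labelled x:''f'', node 2 gets label i+1. - decrement(i): a green node labelled i, where i>0; its label becomes i−1. - root1(x): a blue node becomes a blue root. - no_deg(x): a blue root labelled x is deleted (so by the dangling condition only if it has no incident edges) and replaced by an unmarked non-root node labelled x. - unmarked_edge: blue root 1, node 2 of any mark, unmarked edge 1→2; the edge becomes red. - unvisited(x,y; s,w): blue root 1 labelled x:s, node 2 (any mark) labelled y:''f'', red edge 1→2 labelled w; node 2's label becomes y:(s+w). - reduce(x,y; s,t,w): blue root 1 labelled x:s, node 2 (any mark) labelled y:t, red edge 1→2 labelled w, condition s+w<t; node 2's label becomes y:(s+w). - finish: blue root 1, node 2 any mark, red edge 1→2; edge becomes blue. - unroot1: blue root becomes a grey non-root. - root2: grey node becomes a blue root. - unmark_edge: blue root 1, node 2 any mark, blue edge 1→2; edge becomes unmarked. - unroot2: blue root becomes a blue non-root. - set_flag(x): a green node; its label becomes −1. - flag(): a green node labelled −1; no change (test). - delete_counter(x,y): a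 grey node 1 labelled x, a green node labelled y and a dashed edge from the green node to node 1; the green node and dashed edge are deleted and node 1 becomes a grey root. - no_deg_inv(x): an unmarked node becomes grey. *)

(* Defs.v *)
From Stdlib Require Import List ZArith String.
Import ListNotations.

Inductive atom : Type := AInt (z : Z) | AStr (s : string).
Definition label := list atom.

Inductive nmark : Type := NUnmarked | NRed | NGreen | NBlue | NGrey.
Inductive emark : Type := EUnmarked | ERed | EGreen | EBlue | EDashed.

(* Nodes and edges are identified by natural numbers; only the items listed
   in gV / gE belong to the graph, the attribute functions are irrelevant
   outside them. *)
Record graph : Type := mkGraph {
  gV : list nat;
  gE : list nat;
  nlab : nat -> label;
  nmk : nat -> nmark;
  nroot : nat -> bool;
  src : nat -> nat;
  tgt : nat -> nat;
  elab : nat -> label;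
  emk : nat -> emark }.

Definition wf (G : graph) : Prop :=
  NoDup (gV G) /\ NoDup (gE G) /\
  forall e, In e (gE G) -> In (src G e) (gV G) /\ In (tgt G e) (gV G).

(* graph isomorphism (GP 2 results are determined up to isomorphism) *)
Definition iso (G H : graph) : Prop :=
  exists fV fE : nat -> nat,
    (forall v, In v (gV G) -> In (fV v) (gV H)) /\
    (forall v w, In v (gV G) -> In w (gV G) -> fV v = fV w -> v = w) /\
    (forall v', In v' (gV H) -> exists v, In v (gV G) /\ fV v = v') /\
    (forall e, In e (gE G) -> In (fE e) (gE H)) /\
    (forall e f, In e (gE G) -> In f (gE G) -> fE e = fE f -> e = f) /\
    (forall e', In e' (gE H) -> exists e, In e (gE G) /\ fE e = e') /\
    (forall e, In e (gE G) ->
       src H (fE e) = fV (src G e) /\ tgt H (fE e) = fV (tgt G e) /\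
       elab H (fE e) = elab G e /\ emk H (fE e) = emk G e) /\
    (forall v, In v (gV G) ->
       nlab H (fV v) = nlab G v /\ nmk H (fV v) = nmk G v /\
       nroot H (fV v) = nroot G v).

Definition upd {A : Type} (f : nat -> A) (x : nat) (a : A) : nat -> A :=
  fun y => if Nat.eqb y x then a else f y.

Definition set_nlab (G : graph) (v : nat) (l : label) : graph :=
  mkGraph (gV G) (gE G) (upd (nlab G) v l) (nmk G) (nroot G)
          (src G) (tgt G) (elab G) (emk G).
Definition set_nmk (G : graph) (v : nat) (m : nmark) : graph :=
  mkGraph (gV G) (gE G) (nlab G) (upd (nmk G) v m) (nroot G)
          (src G) (tgt G) (elab G) (emk G).
Definition set_nroot (G : graph) (v : nat) (b : bool) : graph :=
  mkGraph (gV G) (gE G) (nlab G) (nmk G) (upd (nroot G) v b)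
          (src G) (tgt G) (elab G) (emk G).
Definition set_emk (G : graph) (e : nat) (m : emark) : graph :=
  mkGraph (gV G) (gE G) (nlab G) (nmk G) (nroot G)
          (src G) (tgt G) (elab G) (upd (emk G) e m).
Definition add_node (G : graph) (v : nat) (l : label) (m : nmark) (b : bool) : graph :=
  mkGraph (v :: gV G) (gE G) (upd (nlab G) v l) (upd (nmk G) v m) (upd (nroot G) v b)
          (src G) (tgt G) (elab G) (emk G).
Definition add_edge (G : graph) (e s t : nat) (l : label) (m : emark) : graph :=
  mkGraph (gV G) (e :: gE G) (nlab G) (nmk G) (nroot G)
          (upd (src G) e s) (upd (tgt G) e t) (upd (elab G) e l) (upd (emk G) e m).
Definition del_node (G : graph) (v : nat) : graph :=
  mkGraph (remove Nat.eq_dec v (gV G)) (gE G) (nlab G) (nmk G) (nroot G)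
          (src G) (tgt G) (elab G) (emk G).
Definition del_edge (G : graph) (e : nat) : graph :=
  mkGraph (gV G) (remove Nat.eq_dec e (gE G)) (nlab G) (nmk G) (nroot G)
          (src G) (tgt G) (elab G) (emk G).

Inductive rule : Type :=
  | r_set_counter | r_count | r_decrement | r_root1 | r_no_deg
  | r_unmarked_edge | r_unvisited | r_reduce | r_finish | r_unroot1
  | r_root2 | r_unmark_edge | r_unroot2 | r_set_flag | r_flag
  | r_delete_counter | r_no_deg_inv.

(* Matches are injective (distinct left-hand nodes), unrestricted marks
   ("any") impose no constraint, left-hand root nodes must match roots,
   left-hand non-root nodes match any node, the dangling condition is
   imposed for deleted nodes, new items get fresh identifiers. *)
Definition rule_app (r : rule) (G H : graph) : Prop :=
  match r with
  | r_set_counter => exists v c e,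
      In v (gV G) /\ nmk G v = NGrey /\ nroot G v = true /\
      ~ In c (gV G) /\ ~ In e (gE G) /\
      H = add_edge
            (add_node
               (set_nroot (set_nmk (set_nlab G v (nlab G v ++ [AInt 0%Z])) v NBlue) v false)
               c [AInt 0%Z] NGreen false)
            e c v [] EDashed
  | r_count => exists v1 v2 i,
      In v1 (gV G) /\ In v2 (gV G) /\ v1 <> v2 /\
      nmk G v1 = NGrey /\ nmk G v2 = NGreen /\ nlab G v2 = [AInt i] /\
      H = set_nlab (set_nmk (set_nlab G v1 (nlab G v1 ++ [AStr "f"%string])) v1 NBlue)
                   v2 [AInt (i + 1)%Z]
  | r_decrement => exists v i,
      In v (gV G) /\ nmk G v = NGreen /\ nlab G v = [AInt i] /\ (0 < i)%Z /\
      H = set_nlab G v [AInt (i - 1)%Z]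
  | r_root1 => exists v,
      In v (gV G) /\ nmk G v = NBlue /\ H = set_nroot G v true
  | r_no_deg => exists v u,
      In v (gV G) /\ nmk G v = NBlue /\ nroot G v = true /\
      (forall e, In e (gE G) -> src G e <> v /\ tgt G e <> v) /\
      ~ In u (remove Nat.eq_dec v (gV G)) /\
      H = add_node (del_node G v) u (nlab G v) NUnmarked false
  | r_unmarked_edge => exists v1 v2 e,
      In v1 (gV G) /\ In v2 (gV G) /\ v1 <> v2 /\
      nmk G v1 = NBlue /\ nroot G v1 = true /\
      In e (gE G) /\ src G e = v1 /\ tgt G e = v2 /\ emk G e = EUnmarked /\
      H = set_emk G e ERed
  | r_unvisited => exists v1 v2 e xs ys s w,
      In v1 (gV G) /\ In v2 (gV G) /\ v1 <> v2 /\
      nmk G v1 = NBlue /\ nroot G v1 = true /\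
      nlab G v1 = xs ++ [AInt s] /\ nlab G v2 = ys ++ [AStr "f"%string] /\
      In e (gE G) /\ src G e = v1 /\ tgt G e = v2 /\ emk G e = ERed /\
      elab G e = [AInt w] /\
      H = set_nlab G v2 (ys ++ [AInt (s + w)%Z])
  | r_reduce => exists v1 v2 e xs ys s t w,
      In v1 (gV G) /\ In v2 (gV G) /\ v1 <> v2 /\
      nmk G v1 = NBlue /\ nroot G v1 = true /\
      nlab G v1 = xs ++ [AInt s] /\ nlab G v2 = ys ++ [AInt t] /\
      In e (gE G) /\ src G e = v1 /\ tgt G e = v2 /\ emk G e = ERed /\
      elab G e = [AInt w] /\ (s + w < t)%Z /\
      H = set_nlab G v2 (ys ++ [AInt (s + w)%Z])
  | r_finish => exists v1 v2 e,
      In v1 (gV G) /\ In v2 (gV G) /\ v1 <> v2 /\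
      nmk G v1 = NBlue /\ nroot G v1 = true /\
      In e (gE G) /\ src G e = v1 /\ tgt G e = v2 /\ emk G e = ERed /\
      H = set_emk G e EBlue
  | r_unroot1 => exists v,
      In v (gV G) /\ nmk G v = NBlue /\ nroot G v = true /\
      H = set_nroot (set_nmk G v NGrey) v false
  | r_root2 => exists v,
      In v (gV G) /\ nmk G v = NGrey /\
      H = set_nroot (set_nmk G v NBlue) v true
  | r_unmark_edge => exists v1 v2 e,
      In v1 (gV G) /\ In v2 (gV G) /\ v1 <> v2 /\
      nmk G v1 = NBlue /\ nroot G v1 = true /\
      In e (gE G) /\ src G e = v1 /\ tgt G e = v2 /\ emk G e = EBlue /\
      H = set_emk G e EUnmarked
  | r_unroot2 => exists v,
      In v (gV G) /\ nmk G v = NBlue /\ nroot G v = true /\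
      H = set_nroot G v false
  | r_set_flag => exists v,
      In v (gV G) /\ nmk G v = NGreen /\ H = set_nlab G v [AInt (-1)%Z]
  | r_flag => exists v,
      In v (gV G) /\ nmk G v = NGreen /\ nlab G v = [AInt (-1)%Z] /\ H = G
  | r_delete_counter => exists v1 v2 e,
      In v1 (gV G) /\ In v2 (gV G) /\ v1 <> v2 /\
      nmk G v1 = NGrey /\ nmk G v2 = NGreen /\
      In e (gE G) /\ src G e = v2 /\ tgt G e = v1 /\ emk G e = EDashed /\
      elab G e = [] /\
      (forall e', In e' (gE G) -> (src G e' = v2 \/ tgt G e' = v2) -> e' = e) /\
      H = set_nroot (del_node (del_edge G e) v2) v1 true
  | r_no_deg_inv => exists v,
      In v (gV G) /\ nmk G v = NUnmarked /\ H = set_nmk G v NGrey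
  end.

Inductive cmd : Type :=
  | Call (rs : list rule)
  | Seq (P Q : cmd)
  | Loop (P : cmd)                   (* P! *)
  | Try (C P Q : cmd)
  | If (C P Q : cmd)
  | FailC
  | Skip.                            (* missing branch *)

Inductive outcome : Type := Res (H : graph) | Fail.

Inductive exec : cmd -> graph -> outcome -> Prop :=
  | ex_call_ok rs r G H : In r rs -> rule_app r G H -> exec (Call rs) G (Res H)
  | ex_call_fail rs G :
      (forall r H, In r rs -> ~ rule_app r G H) -> exec (Call rs) G Fail
  | ex_seq_ok P Q G H o : exec P G (Res H) -> exec Q H o -> exec (Seq P Q) G o
  | ex_seq_fail P Q G : exec P G Fail -> exec (Seq P Q) G Fail
  | ex_loop_stop P G : exec P G Fail -> exec (Loop P) G (Res G)
  | ex_loop_step P G H o : exec P G (Res H) -> exec (Loop P) H o -> exec (Loop P) G o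
  | ex_try_then C P Q G H o : exec C G (Res H) -> exec P H o -> exec (Try C P Q) G o
  | ex_try_else C P Q G o : exec C G Fail -> exec Q G o -> exec (Try C P Q) G o
  | ex_if_then C P Q G H o : exec C G (Res H) -> exec P G o -> exec (If C P Q) G o
  | ex_if_else C P Q G o : exec C G Fail -> exec Q G o -> exec (If C P Q) G o
  | ex_fail G : exec FailC G Fail
  | ex_skip G : exec Skip G (Res G).

Inductive terminates : cmd -> graph -> Prop :=
  | t_call rs G : terminates (Call rs) G
  | t_seq P Q G : terminates P G ->
      (forall H, exec P G (Res H) -> terminates Q H) -> terminates (Seq P Q) G
  | t_loop P G : terminates P G ->
      (forall H, exec P G (Res H) -> terminates (Loop P) H) -> terminates (Loop P) G
  | t_try C P Q G : terminates C G ->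
      (forall H, exec C G (Res H) -> terminates P H) ->
      (exec C G Fail -> terminates Q G) -> terminates (Try C P Q) G
  | t_if C P Q G : terminates C G ->
      (forall H, exec C G (Res H) -> terminates P G) ->
      (exec C G Fail -> terminates Q G) -> terminates (If C P Q) G
  | t_fail G : terminates FailC G
  | t_skip G : terminates Skip G.

Definition Relax : cmd :=
  Seq (Call [r_root1])
      (Try (Call [r_no_deg]) Skip
           (Seq (Loop (Seq (Call [r_unmarked_edge])
                           (Seq (Try (Call [r_unvisited; r_reduce]) Skip Skip)
                                (Call [r_finish]))))
                (Call [r_unroot1]))).

Definition Clean : cmd :=
  Seq (Call [r_root2]) (Seq (Loop (Call [r_unmark_edge])) (Call [r_unroot2])).

Definition Final : cmd :=
  Seq (Loop (Seq (Call [r_root1])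
                 (Seq (Loop (Seq (Call [r_unmarked_edge])
                                 (Seq (If (Call [r_reduce]) (Call [r_set_flag]) Skip)
                                      (Call [r_finish]))))
                      (Call [r_unroot1]))))
      (Seq (If (Call [r_flag]) FailC Skip)
           (Seq (Call [r_delete_counter]) (Loop (Call [r_no_deg_inv])))).

Definition Main : cmd :=
  Seq (Call [r_set_counter])
      (Seq (Loop (Call [r_count]))
           (Seq (Loop (Seq (Call [r_decrement]) (Seq (Loop Relax) (Loop Clean))))
                Final)).

Definition ew (G : graph) (e : nat) : Z :=
  match elab G e with [AInt w] => w | _ => 0%Z end.

Definition weight (G : graph) (es : list nat) : Z :=
  fold_right (fun e acc => (ew G e + acc)%Z) 0%Z es.

Fixpoint walk (G : graph) (u : nat) (es : list nat) (v : nat) : Prop :=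
  match es with
  | [] => u = v
  | e :: es' => In e (gE G) /\ src G e = u /\ walk G (tgt G e) es' v
  end.

Definition dpath (G : graph) (u : nat) (es : list nat) (v : nat) : Prop :=
  walk G u es v /\ NoDup (u :: map (tgt G) es).

Definition dcycle (G : graph) (u : nat) (es : list nat) : Prop :=
  es <> [] /\ walk G u es u /\ NoDup (map (tgt G) es).

Definition reachable (G : graph) (r v : nat) : Prop :=
  exists es, dpath G r es v.

Definition min_dist (G : graph) (r v : nat) (d : Z) : Prop :=
  (exists es, dpath G r es v /\ weight G es = d) /\
  (forall es, dpath G r es v -> (d <= weight G es)%Z).

Definition neg_cycle_reachable (G : graph) (r : nat) : Prop :=
  exists u es, dcycle G u es /\ (weight G es < 0)%Z /\ reachable G r u.

Definition bf_result (G : graph) (r : nat) (H0 : graph) : Prop :=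
  gV H0 = gV G /\ gE H0 = gE G /\
  (forall e, In e (gE G) ->
     src H0 e = src G e /\ tgt H0 e = tgt G e /\ elab H0 e = elab G e /\
     emk H0 e = EBlue) /\
  (forall v, In v (gV G) ->
     nmk H0 v = nmk G v /\ nroot H0 v = nroot G v /\
     (reachable G r v ->
        exists d, min_dist G r v d /\ nlab H0 v = nlab G v ++ [AInt d]) /\
     (~ reachable G r v -> nlab H0 v = nlab G v ++ [AStr "f"%string])).

(* Main.v *)
Require Import Defs.
From Stdlib Require Import List ZArith String.
Import ListNotations.
From Stdlib Require Import Lia Classical Wf_nat.
Import List.

Definition safe (P : cmd) (Pre : graph -> Prop) (Post : graph -> outcome -> Prop) :=
  forall H, Pre H -> terminates P H /\ forall o, exec P H o -> Post H o.

Lemma term_exec P H : terminates P H -> exists o, exec P H o.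
Proof.
  induction 1 as [rs G|P Q G tP IHP tQ IHQ|P G tP IHP tL IHL|C P Q G tC IHC tP IHP tQ IHQ|C P Q G tC IHC tP IHP tQ IHQ|G|G].
  - destruct (classic (exists rl H', In rl rs /\ rule_app rl G H')) as [[rl [H' [? ?]]]|n].
    + exists (Res H'); eapply ex_call_ok; eauto.
    + exists Fail; apply ex_call_fail; intros rl H' Hi Ha; apply n; eauto.
  - destruct IHP as [[K|] Hx].
    + destruct (IHQ _ Hx) as [o Ho]. exists o; eapply ex_seq_ok; eauto.
    + exists Fail; apply ex_seq_fail; auto.
  - destruct IHP as [[K|] Hx].
    + destruct (IHL _ Hx) as [o Ho]. exists o; eapply ex_loop_step; eauto.
    + exists (Res G); apply ex_loop_stop; auto.
  - destruct IHC as [[K|] Hx].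
    + destruct (IHP _ Hx) as [o Ho]. exists o; eapply ex_try_then; eauto.
    + destruct (IHQ Hx) as [o Ho]. exists o; eapply ex_try_else; eauto.
  - destruct IHC as [[K|] Hx].
    + destruct (IHP _ Hx) as [o Ho]. exists o; eapply ex_if_then; eauto.
    + destruct (IHQ Hx) as [o Ho]. exists o; eapply ex_if_else; eauto.
  - exists Fail; constructor.
  - exists (Res G); constructor.
Qed.

Lemma safe_call rs (Pre : graph -> Prop) (Post : graph -> outcome -> Prop) :
  (forall H, Pre H -> forall rl H', In rl rs -> rule_app rl H H' -> Post H (Res H')) ->
  (forall H, Pre H -> (forall rl H', In rl rs -> ~ rule_app rl H H') -> Post H Fail) ->
  safe (Call rs) Pre Post.
Proof.
  intros h1 h2 H HP; split; [constructor|].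
  intros o Hx; inversion Hx; subst; eauto.
Qed.

Lemma safe_seq P Q (Pre : graph -> Prop) M N (Post : graph -> outcome -> Prop) :
  safe P Pre M ->
  safe Q (fun H1 => exists H, Pre H /\ M H (Res H1)) N ->
  (forall H, Pre H -> M H Fail -> Post H Fail) ->
  (forall H H1 o, Pre H -> M H (Res H1) -> N H1 o -> Post H o) ->
  safe (Seq P Q) Pre Post.
Proof.
  intros sP sQ h1 h2 H HP; destruct (sP H HP) as [tP oP]; split.
  - constructor; auto. intros H1 Hx. apply sQ. eauto.
  - intros o Hx; inversion Hx; subst.
    + eapply h2; eauto. apply sQ; eauto.
    + eauto.
Qed.

Lemma safe_loop P (I : graph -> Prop) (F : graph -> Prop) (m : graph -> nat) :
  safe P I (fun H o => match o with Res H1 => I H1 /\ m H1 < m H | Fail => F H end) ->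
  safe (Loop P) I (fun _ o => exists H1, o = Res H1 /\ I H1 /\ F H1).
Proof.
  intros sP H HI; split.
  - remember (m H) as n. revert H HI Heqn. induction n as [n IH] using lt_wf_ind.
    intros H HI Hn. destruct (sP H HI) as [tP oP]. constructor; auto.
    intros H1 Hx. destruct (oP _ Hx) as [HI1 Hlt]. eapply IH; [|eauto|reflexivity]. lia.
  - intros o Hx. remember (Loop P) as L. revert HeqL HI.
    induction Hx; intros HeqL HI; try discriminate; inversion HeqL; subst.
    + exists G. split; auto. split; auto. destruct (sP G HI) as [_ oP]. apply (oP Fail). assumption.
    + destruct (sP G HI) as [_ oP]. destruct (oP _ Hx1) as [HI1 _]. auto.
Qed.

Lemma safe_try C P Q (Pre : graph -> Prop) MC NP NQ (Post : graph -> outcome -> Prop) :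
  safe C Pre MC ->
  safe P (fun H1 => exists H, Pre H /\ MC H (Res H1)) NP ->
  safe Q (fun H => Pre H /\ MC H Fail) NQ ->
  (forall H H1 o, Pre H -> MC H (Res H1) -> NP H1 o -> Post H o) ->
  (forall H o, Pre H -> MC H Fail -> NQ H o -> Post H o) ->
  safe (Try C P Q) Pre Post.
Proof.
  intros sC sP sQ h1 h2 H HP; destruct (sC H HP) as [tC oC]; split.
  - constructor; auto.
    + intros H1 Hx. apply sP. eauto.
    + intros Hx. apply sQ. auto.
  - intros o Hx; inversion Hx; subst.
    + eapply h1; eauto. apply sP; eauto.
    + eapply h2; eauto. apply sQ; eauto.
Qed.

Lemma safe_if C P Q (Pre : graph -> Prop) MC NP NQ (Post : graph -> outcome -> Prop) :
  safe C Pre MC ->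
  safe P (fun H => Pre H /\ exists H1, MC H (Res H1)) NP ->
  safe Q (fun H => Pre H /\ MC H Fail) NQ ->
  (forall H o, Pre H -> (exists H1, MC H (Res H1)) -> NP H o -> Post H o) ->
  (forall H o, Pre H -> MC H Fail -> NQ H o -> Post H o) ->
  safe (If C P Q) Pre Post.
Proof.
  intros sC sP sQ h1 h2 H HP; destruct (sC H HP) as [tC oC]; split.
  - constructor; auto.
    + intros H1 Hx. apply sP. eauto.
    + intros Hx. apply sQ. auto.
  - intros o Hx; inversion Hx; subst.
    + eapply h1; eauto. apply sP; eauto.
    + eapply h2; eauto. apply sQ; eauto.
Qed.

Lemma safe_skip (Pre : graph -> Prop) : safe Skip Pre (fun H o => o = Res H).
Proof. intros H _; split; [constructor|]. intros o Hx; inversion Hx; auto. Qed.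

Lemma safe_failc (Pre : graph -> Prop) : safe FailC Pre (fun H o => o = Fail).
Proof. intros H _; split; [constructor|]. intros o Hx; inversion Hx; auto. Qed.

Lemma safe_conseq P (Pre Pre' : graph -> Prop) (Post Post' : graph -> outcome -> Prop) :
  safe P Pre Post -> (forall H, Pre' H -> Pre H) ->
  (forall H o, Pre' H -> Post H o -> Post' H o) -> safe P Pre' Post'.
Proof.
  intros s h1 h2 H HP. destruct (s H (h1 _ HP)) as [t o]. split; auto.
Qed.

Lemma safe_ex {A : Type} P (Pre : A -> graph -> Prop) (Post : graph -> outcome -> Prop) :
  (forall a, safe P (Pre a) Post) -> safe P (fun H => exists a, Pre a H) Post.
Proof. intros s H [a Ha]. apply (s a H Ha). Qed.

Lemma safe_seq2 P Q (Pre : graph -> Prop) M (MidP : graph -> Prop) N (Post : graph -> outcome -> Prop) :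
  safe P Pre M -> safe Q MidP N ->
  (forall H H1, Pre H -> M H (Res H1) -> MidP H1) ->
  (forall H, Pre H -> M H Fail -> Post H Fail) ->
  (forall H H1 o, Pre H -> M H (Res H1) -> N H1 o -> Post H o) ->
  safe (Seq P Q) Pre Post.
Proof.
  intros sP sQ hm h1 h2. eapply safe_seq; eauto.
  eapply safe_conseq; [exact sQ| |].
  - intros H1 [H [hp hM]]. eauto.
  - intros H1 o _ hN. exact hN.
Qed.

Lemma safe_try2 C P Q (Pre : graph -> Prop) MC (PreP : graph -> Prop) NP NQ (Post : graph -> outcome -> Prop) :
  safe C Pre MC -> safe P PreP NP ->
  safe Q (fun H => Pre H /\ MC H Fail) NQ ->
  (forall H H1, Pre H -> MC H (Res H1) -> PreP H1) ->
  (forall H H1 o, Pre H -> MC H (Res H1) -> NP H1 o -> Post H o) ->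
  (forall H o, Pre H -> MC H Fail -> NQ H o -> Post H o) ->
  safe (Try C P Q) Pre Post.
Proof.
  intros sC sP sQ hm h1 h2. eapply safe_try; eauto.
  eapply safe_conseq; [exact sP| |].
  - intros H1 [H [hp hM]]. eauto.
  - intros H1 o _ hN. exact hN.
Qed.

Lemma filt_mono {A : Type} (f g : A -> bool) l :
  (forall x, In x l -> g x = true -> f x = true) ->
  (length (filter g l) <= length (filter f l))%nat.
Proof.
  induction l as [|a l IH]; intros h; simpl; auto.
  assert (IH' := IH (fun x hx => h x (or_intror hx))).
  destruct (g a) eqn:ga.
  - rewrite (h a (or_introl eq_refl) ga). simpl; lia.
  - destruct (f a); simpl; lia.
Qed.

Lemma filt_lt {A : Type} (f g : A -> bool) l x :
  In x l -> f x = true -> g x = false ->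
  (forall y, In y l -> g y = true -> f y = true) ->
  (length (filter g l) < length (filter f l))%nat.
Proof.
  induction l as [|a l IH]; intros hi hf hg h; simpl in *; [tauto|].
  destruct hi as [<-|hi].
  - rewrite hf, hg. simpl. pose proof (filt_mono f g l (fun y hy => h y (or_intror hy))). lia.
  - assert (IH' := IH hi hf hg (fun y hy => h y (or_intror hy))).
    destruct (g a) eqn:ga.
    + rewrite (h a (or_introl eq_refl) ga). simpl; lia.
    + destruct (f a); simpl; lia.
Qed.

Lemma filt_remove_le (f : nat -> bool) l x :
  (length (filter f (remove Nat.eq_dec x l)) <= length (filter f l))%nat.
Proof.
  induction l as [|a l IH]; simpl; auto.
  destruct (Nat.eq_dec x a); simpl.
  - destruct (f a); simpl; lia.
  - destruct (f a); simpl; lia.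
Qed.

Lemma filt_remove_lt (f : nat -> bool) l x :
  In x l -> f x = true -> (length (filter f (remove Nat.eq_dec x l)) < length (filter f l))%nat.
Proof.
  induction l as [|a l IH]; intros hi hf; simpl in *; [tauto|].
  destruct (Nat.eq_dec x a) as [e|e].
  - subst a. rewrite hf. simpl. pose proof (filt_remove_le f l x). lia.
  - destruct hi as [->|hi]; [congruence|]. simpl. destruct (f a); simpl; specialize (IH hi hf); lia.
Qed.

Lemma filt_exact {A : Type} (f g : A -> bool) l x :
  NoDup l -> In x l -> f x = true -> g x = false ->
  (forall y, In y l -> y <> x -> g y = f y) ->
  S (length (filter g l)) = length (filter f l).
Proof.
  induction l as [|a l IH]; intros hd hi hf hg h; simpl in *; [tauto|].
  inversion hd; subst. destruct hi as [<-|hi].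
  - rewrite hf, hg. simpl. f_equal.
    assert (filter g l = filter f l).
    { apply filter_ext_in. intros y hy. apply h; auto. intros ->; contradiction. }
    rewrite H; auto.
  - assert (a <> x) by (intros ->; contradiction).
    rewrite (h a (or_introl eq_refl) H). destruct (f a); simpl; rewrite IH; auto.
Qed.

Lemma filt_nil {A : Type} (f : A -> bool) l : (forall x, In x l -> f x = false) -> filter f l = [].
Proof.
  induction l as [|a l IH]; intros h; simpl; auto.
  rewrite (h a (or_introl eq_refl)). apply IH. intros x hx; apply h; right; auto.
Qed.

Lemma filt_true {A : Type} (l : list A) : length (filter (fun _ => true) l) = length l.
Proof. induction l; simpl; auto. Qed.

Lemma fresh_nat (l : list nat) : exists x, ~ In x l.
Proof.
  exists (S (fold_right plus 0 l)). intros h.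
  assert (forall y, In y l -> (y <= fold_right plus 0 l)%nat).
  { clear h. induction l as [|a l IH]; simpl; intros y hy; [tauto|].
    destruct hy as [->|hy]; [lia|specialize (IH y hy); lia]. }
  specialize (H _ h). lia.
Qed.

Open Scope Z_scope.

Lemma walk_app (G : graph) u p q w :
  walk G u (p ++ q) w <-> exists v, walk G u p v /\ walk G v q w.
Proof.
  revert u; induction p as [|e p IH]; intros u; simpl.
  - split; [intros h; exists u; auto|intros [v [-> h]]; auto].
  - split.
    + intros [h1 [h2 h3]]. apply IH in h3. destruct h3 as [v [h3 h4]]. exists v; auto.
    + intros [v [[h1 [h2 h3]] h4]]. split; auto. split; auto. apply IH; eauto.
Qed.

Lemma weight_app (G : graph) p q : weight G (p ++ q) = weight G p + weight G q.
Proof. induction p; simpl; [lia|]. rewrite IHp; lia. Qed.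

Lemma walk_edges (G : graph) u p v e : walk G u p v -> In e p -> In e (gE G).
Proof.
  revert u; induction p as [|a p IH]; intros u h hi; simpl in *; [tauto|].
  destruct h as [h1 [h2 h3]]. destruct hi as [<-|hi]; eauto.
Qed.

Lemma walk_in_tgt (G : graph) u p v x : walk G u p v -> In x (map (tgt G) p) ->
  exists p2 p3, p = p2 ++ p3 /\ p2 <> [] /\ walk G u p2 x /\ walk G x p3 v.
Proof.
  revert u; induction p as [|e p IH]; intros u h hi; simpl in *; [tauto|].
  destruct h as [h1 [h2 h3]]. destruct hi as [hx|hi].
  - exists [e], p. simpl. subst. repeat split; auto. discriminate.
  - destruct (IH _ h3 hi) as [p2 [p3 [-> [hn [w1 w2]]]]].
    exists (e :: p2), p3. simpl. repeat split; auto. discriminate.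
Qed.

Lemma shortcut (G : graph) u p v : walk G u p v -> ~ NoDup (u :: map (tgt G) p) ->
  exists p1 p2 p3 x, p = p1 ++ p2 ++ p3 /\ p2 <> [] /\ walk G u p1 x /\
    walk G x p2 x /\ walk G x p3 v.
Proof.
  revert u; induction p as [|e p IH]; intros u h hn.
  - exfalso; apply hn; constructor; [simpl; tauto|constructor].
  - destruct (classic (In u (map (tgt G) (e :: p)))) as [hi|hi].
    + destruct (walk_in_tgt G u (e :: p) v u h hi) as [p2 [p3 [eq [hn2 [w1 w2]]]]].
      exists [], p2, p3, u. simpl. repeat split; auto.
    + simpl in h. destruct h as [h1 [h2 h3]].
      assert (hn' : ~ NoDup (tgt G e :: map (tgt G) p)).
      { intros hd. apply hn. constructor; auto. }
      destruct (IH _ h3 hn') as [p1 [p2 [p3 [x [eq [hne [w1 [w2 w3]]]]]]]].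
      exists (e :: p1), p2, p3, x. subst. simpl. repeat split; auto.
Qed.

Lemma walk_dpath (G : graph) u p v : walk G u p v -> exists q, dpath G u q v /\ (length q <= length p)%nat.
Proof.
  remember (length p) as n. revert p Heqn. induction n as [n IH] using lt_wf_ind.
  intros p Hn h. destruct (classic (NoDup (u :: map (tgt G) p))) as [hd|hd].
  - exists p. split; [split|]; auto; lia.
  - destruct (shortcut G u p v h hd) as [p1 [p2 [p3 [x [eq [hne [w1 [w2 w3]]]]]]]].
    assert (hw : walk G u (p1 ++ p3) v) by (apply walk_app; eauto).
    assert (hl : (length (p1 ++ p3) < n)%nat).
    { subst. rewrite !length_app. destruct p2; [congruence|simpl]. lia. }
    destruct (IH _ hl _ eq_refl hw) as [q [hq hlq]]. exists q; split; auto. lia.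
Qed.

Lemma neg_closed (G : graph) r : forall n x p q, (length p <= n)%nat -> walk G x p x -> p <> [] ->
  weight G p < 0 -> walk G r q x ->
  exists u c q', dcycle G u c /\ weight G c < 0 /\ walk G r q' u.
Proof.
  induction n as [n IH] using lt_wf_ind.
  intros x p q hl hw hne hwt hq.
  destruct (classic (NoDup (map (tgt G) p))) as [hd|hd].
  - exists x, p, q. split; auto. split; auto.
  - destruct p as [|e p']; [congruence|]. simpl in hw. destruct hw as [he [hs hw]].
    simpl in hd.
    destruct (shortcut G (tgt G e) p' x hw hd) as [p1 [p2 [p3 [y [eq [hne2 [w1 [w2 w3]]]]]]]].
    subst p'. simpl in hwt. rewrite !weight_app in hwt.
    assert (hlen : (length p2 >= 1 /\ length (e :: p1 ++ p2 ++ p3) = S (length p1 + length p2 + length p3))%nat).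
    { destruct p2; [congruence|]. simpl. rewrite !length_app. simpl. rewrite ?length_app. split; [lia|]. lia. }
    destruct (Z_lt_ge_dec (weight G p2) 0) as [hn2|hn2].
    + apply (IH (length p2)) with (x := y) (p := p2) (q := q ++ e :: p1); auto.
      * simpl in hl. rewrite !length_app in hl. lia.
      * apply walk_app. exists x. split; auto. simpl. auto.
    + apply (IH (length (e :: p1 ++ p3))) with (x := x) (p := e :: p1 ++ p3) (q := q); auto.
      * simpl in *. rewrite !length_app in *. lia.
      * simpl. split; auto. split; auto. apply walk_app. eauto.
      * discriminate.
      * simpl. rewrite weight_app. lia.
Qed.

Lemma walk_dpath_le (G : graph) r p v : ~ neg_cycle_reachable G r -> walk G r p v ->
  exists q, dpath G r q v /\ weight G q <= weight G p.
Proof.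
  intros hneg. remember (length p) as n. revert p Heqn. induction n as [n IH] using lt_wf_ind.
  intros p Hn h. destruct (classic (NoDup (r :: map (tgt G) p))) as [hd|hd].
  - exists p. split; [split|]; auto; lia.
  - destruct (shortcut G r p v h hd) as [p1 [p2 [p3 [x [eq [hne [w1 [w2 w3]]]]]]]].
    destruct (Z_lt_ge_dec (weight G p2) 0) as [hn2|hn2].
    + exfalso. destruct (neg_closed G r (length p2) x p2 p1 (le_n _) w2 hne hn2 w1)
        as [u [c [q' [hc [hwc hq']]]]].
      destruct (walk_dpath G r q' u hq') as [q'' [hq'' _]].
      apply hneg. exists u, c. split; auto. split; auto. exists q''; auto.
    + assert (hw : walk G r (p1 ++ p3) v) by (apply walk_app; eauto).
      assert (hl : (length (p1 ++ p3) < n)%nat).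
      { subst. rewrite !length_app. destruct p2; [congruence|simpl]. lia. }
      destruct (IH _ hl _ eq_refl hw) as [q [hq hlq]]. exists q; split; auto.
      subst p. rewrite !weight_app in *. lia.
Qed.

Lemma potential (G : graph) (d : nat -> Z) u p v : walk G u p v ->
  (forall e, In e p -> d (tgt G e) <= d (src G e) + ew G e) -> d v <= d u + weight G p.
Proof.
  revert u; induction p as [|e p IH]; intros u h hd; simpl in *.
  - subst; lia.
  - destruct h as [h1 [h2 h3]]. specialize (IH _ h3 (fun e' hi => hd e' (or_intror hi))).
    specialize (hd e (or_introl eq_refl)). subst. lia.
Qed.

Lemma walk_split_edge (G : graph) u p v e : walk G u p v -> In e p ->
  exists p1 p2, p = p1 ++ e :: p2 /\ walk G u p1 (src G e) /\ walk G (tgt G e) p2 v.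
Proof.
  intros h hi. destruct (in_split _ _ hi) as [p1 [p2 ->]].
  apply walk_app in h. destruct h as [x [h1 [h2 [h3 h4]]]]. subst x.
  exists p1, p2. auto.
Qed.

Lemma dpath_len (G : graph) u q v : wf G -> In u (gV G) -> dpath G u q v ->
  (S (length q) <= length (gV G))%nat.
Proof.
  intros [_ [_ hwf]] hu [hw hd].
  assert (hincl : incl (u :: map (tgt G) q) (gV G)).
  { intros x [<-|hx]; auto. apply in_map_iff in hx. destruct hx as [e [<- he]].
    apply hwf. eapply walk_edges; eauto. }
  pose proof (NoDup_incl_length hd hincl). simpl in H. rewrite length_map in H. lia.
Qed.

Definition toatom (o : option Z) : atom :=
  match o with Some z => AInt z | None => AStr "f"%string end.
Definition le_oz (a b : option Z) : Prop :=
  match b with None => True | Some y => match a with Some x => x <= y | None => False end end.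
Definition addw (a : option Z) (w : Z) : option Z :=
  match a with Some s => Some (s + w) | None => None end.

Definition nB (m : nmark) : bool := match m with NBlue => true | _ => false end.
Definition nG (m : nmark) : bool := match m with NGrey => true | _ => false end.
Definition nU (m : nmark) : bool := match m with NUnmarked => true | _ => false end.
Definition eU (m : emark) : bool := match m with EUnmarked => true | _ => false end.
Definition eB (m : emark) : bool := match m with EBlue => true | _ => false end.
Definition mcnt (f : nmark -> bool) (H : graph) : nat := length (filter (fun x => f (nmk H x)) (gV H)).
Definition ecnt (f : emark -> bool) (H : graph) : nat := length (filter (fun e => f (emk H e)) (gE H)).

Lemma toatom_int a s : toatom a = AInt s -> a = Some s.
Proof. destruct a; simpl; congruence. Qed.
Lemma toatom_f a : toatom a = AStr "f"%string -> a = None.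
Proof. destruct a; simpl; congruence. Qed.
Lemma toatom_f' a : toatom a <> AStr "f"%string -> exists s, a = Some s.
Proof. destruct a; simpl; [eauto|congruence]. Qed.

Lemma app_tail_inv (xs ys : list atom) a b : xs ++ [a] = ys ++ [b] -> xs = ys /\ a = b.
Proof. intros h. apply app_inj_tail in h. auto. Qed.

Section Main.
Variable G : graph.
Variable r : nat.
Hypothesis Hwf : wf G.
Hypothesis Hr : In r (gV G).
Hypothesis Hnl : forall e, In e (gE G) -> src G e <> tgt G e.
Hypothesis Hel : forall e, In e (gE G) -> elab G e = [AInt (ew G e)].
Hypothesis Hgrey : forall v, In v (gV G) -> nmk G v = NGrey.
Hypothesis Hroot : forall v, In v (gV G) -> nroot G v = true -> v = r.
Hypothesis Hunm : forall e, In e (gE G) -> emk G e = EUnmarked.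
Hypothesis Hrr : nroot G r = true.

Definition fixedv v := v = r \/ exists e, In e (gE G) /\ (src G e = v \/ tgt G e = v).
Definition Sound (D : nat -> option Z) := forall v d, In v (gV G) -> D v = Some d ->
  exists p, walk G r p v /\ weight G p = d.
Definition Compl (D : nat -> option Z) (n : nat) := forall v p, walk G r p v ->
  (length p <= n)%nat -> le_oz (D v) (Some (weight G p)).
Definition relaxed (D0 D : nat -> option Z) e := le_oz (D (tgt G e)) (addw (D0 (src G e)) (ew G e)).
Definition reducible (D : nat -> option Z) e := exists s t, D (src G e) = Some s /\
  D (tgt G e) = Some t /\ s + ew G e < t.

Lemma E_src_in e : In e (gE G) -> In (src G e) (gV G).
Proof. intros h. destruct Hwf as [_ [_ hw]]. apply hw; auto. Qed.
Lemma E_tgt_in e : In e (gE G) -> In (tgt G e) (gV G).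
Proof. intros h. destruct Hwf as [_ [_ hw]]. apply hw; auto. Qed.
Lemma fix_src e : In e (gE G) -> fixedv (src G e).
Proof. intros h; right; eauto. Qed.
Lemma fix_tgt e : In e (gE G) -> fixedv (tgt G e).
Proof. intros h; right; eauto. Qed.
Lemma fix_r : fixedv r.
Proof. left; auto. Qed.

Section Cnt.
Variables c e0 : nat.
Hypothesis Hc : ~ In c (gV G).
Hypothesis He0 : ~ In e0 (gE G).

Lemma E_ne e : In e (gE G) -> e <> e0.
Proof. intros h ->; contradiction. Qed.

Record Shape (H : graph) (phi : nat -> nat) (D : nat -> option Z) (k : Z) : Prop := {
  sh_E : gE H = e0 :: gE G;
  sh_src : src H = upd (src G) e0 c;
  sh_tgt : tgt H = upd (tgt G) e0 r;
  sh_elab : elab H = upd (elab G) e0 [];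
  sh_emk0 : emk H e0 = EDashed;
  sh_c : In c (gV H);
  sh_clab : nlab H c = [AInt k];
  sh_cmk : nmk H c = NGreen;
  sh_croot : nroot H c = false;
  sh_in : forall v, In v (gV G) -> In (phi v) (gV H);
  sh_nc : forall v, In v (gV G) -> phi v <> c;
  sh_lab : forall v, In v (gV G) -> nlab H (phi v) = nlab G v ++ [toatom (D v)];
  sh_ng : forall v, In v (gV G) -> nmk H (phi v) <> NGreen;
  sh_inj : forall v w, In v (gV G) -> In w (gV G) -> phi v = phi w -> v = w;
  sh_cov : forall x, In x (gV H) -> x = c \/ exists v, In v (gV G) /\ phi v = x;
  sh_fix : forall v, In v (gV G) -> fixedv v -> phi v = v }.

Section ShapeLemmas.
Variables (H : graph) (phi : nat -> nat) (D : nat -> option Z) (k : Z).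
Hypothesis S : Shape H phi D k.

Lemma sh_upd {A : Type} (f : nat -> A) v w a : In v (gV G) -> In w (gV G) ->
  upd f (phi v) a (phi w) = if Nat.eqb w v then a else f (phi w).
Proof.
  intros hv hw. unfold upd. destruct (Nat.eqb_spec (phi w) (phi v)) as [h|h];
  destruct (Nat.eqb_spec w v) as [h'|h']; subst; auto.
  - exfalso; apply h'. apply (sh_inj _ _ _ _ S); auto.
  - congruence.
Qed.

Lemma sh_updc {A : Type} (f : nat -> A) v a : In v (gV G) -> upd f c a (phi v) = f (phi v).
Proof.
  intros hv. unfold upd. destruct (Nat.eqb_spec (phi v) c) as [h|h]; auto.
  exfalso; apply (sh_nc _ _ _ _ S v hv h).
Qed.

Lemma sh_psrc e : In e (gE G) -> phi (src G e) = src G e.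
Proof. intros h. apply (sh_fix _ _ _ _ S). apply E_src_in; auto. apply fix_src; auto. Qed.
Lemma sh_ptgt e : In e (gE G) -> phi (tgt G e) = tgt G e.
Proof. intros h. apply (sh_fix _ _ _ _ S). apply E_tgt_in; auto. apply fix_tgt; auto. Qed.
Lemma sh_pr : phi r = r.
Proof. apply (sh_fix _ _ _ _ S); auto. apply fix_r. Qed.

Lemma sh_srcH e : In e (gE G) -> src H e = phi (src G e).
Proof.
  intros h. rewrite (sh_src _ _ _ _ S), sh_psrc; auto. unfold upd.
  destruct (Nat.eqb_spec e e0); auto. exfalso; apply (E_ne e); auto.
Qed.
Lemma sh_tgtH e : In e (gE G) -> tgt H e = phi (tgt G e).
Proof.
  intros h. rewrite (sh_tgt _ _ _ _ S), sh_ptgt; auto. unfold upd.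
  destruct (Nat.eqb_spec e e0); auto. exfalso; apply (E_ne e); auto.
Qed.
Lemma sh_elabH e : In e (gE G) -> elab H e = elab G e.
Proof.
  intros h. rewrite (sh_elab _ _ _ _ S). unfold upd.
  destruct (Nat.eqb_spec e e0); auto. exfalso; apply (E_ne e); auto.
Qed.

Lemma sh_resolve x : In x (gV H) -> nmk H x <> NGreen -> exists v, In v (gV G) /\ x = phi v.
Proof.
  intros hx hg. destruct (sh_cov _ _ _ _ S x hx) as [->|[v [hv <-]]].
  - exfalso; apply hg; apply (sh_cmk _ _ _ _ S).
  - eauto.
Qed.

Lemma sh_eresolve e : In e (gE H) -> emk H e <> EDashed -> In e (gE G).
Proof.
  intros he hd. rewrite (sh_E _ _ _ _ S) in he. destruct he as [<-|he]; auto.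
  exfalso; apply hd; apply (sh_emk0 _ _ _ _ S).
Qed.

Lemma sh_phi_src_ne e : In e (gE G) -> phi (src G e) <> phi (tgt G e).
Proof. intros h. rewrite sh_psrc, sh_ptgt; auto. Qed.

Lemma sh_D_of v s xs : In v (gV G) -> nlab H (phi v) = xs ++ [AInt s] -> D v = Some s.
Proof.
  intros hv h. rewrite (sh_lab _ _ _ _ S v hv) in h. apply app_tail_inv in h. destruct h as [_ h].
  apply toatom_int; auto.
Qed.
Lemma sh_D_off v ys : In v (gV G) -> nlab H (phi v) = ys ++ [AStr "f"%string] ->
  D v = None /\ ys = nlab G v.
Proof.
  intros hv h. rewrite (sh_lab _ _ _ _ S v hv) in h. apply app_tail_inv in h. destruct h as [h1 h].
  split; auto. apply toatom_f; auto.
Qed.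
Lemma sh_D_ofi v ys t : In v (gV G) -> nlab H (phi v) = ys ++ [AInt t] ->
  D v = Some t /\ ys = nlab G v.
Proof.
  intros hv h. rewrite (sh_lab _ _ _ _ S v hv) in h. apply app_tail_inv in h. destruct h as [h1 h].
  split; auto. apply toatom_int; auto.
Qed.

Lemma sh_k i : nlab H c = [AInt i] -> i = k.
Proof. rewrite (sh_clab _ _ _ _ S). congruence. Qed.

Lemma sh_nroot x b : x <> c -> Shape (set_nroot H x b) phi D k.
Proof.
  intros hx. destruct S; constructor; simpl; auto.
  unfold upd. destruct (Nat.eqb_spec c x); congruence.
Qed.

Lemma sh_nmk x m : x <> c -> m <> NGreen -> Shape (set_nmk H x m) phi D k.
Proof.
  intros hx hm. destruct S; constructor; simpl; auto.
  - unfold upd. destruct (Nat.eqb_spec c x); congruence.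
  - intros v hv. unfold upd. destruct (Nat.eqb_spec (phi v) x); auto.
Qed.

Lemma sh_emk e m : e <> e0 -> Shape (set_emk H e m) phi D k.
Proof.
  intros he. destruct S; constructor; simpl; auto.
  unfold upd. destruct (Nat.eqb_spec e0 e); congruence.
Qed.

Lemma sh_nlab v a : In v (gV G) ->
  Shape (set_nlab H (phi v) (nlab G v ++ [toatom a])) phi (upd D v a) k.
Proof.
  intros hv. pose proof (sh_nc _ _ _ _ S v hv) as hnc.
  destruct S; constructor; simpl; auto.
  - unfold upd. destruct (Nat.eqb_spec c (phi v)); congruence.
  - intros w hw. rewrite sh_upd; auto. unfold upd. destruct (Nat.eqb_spec w v); subst; auto.
Qed.

Lemma sh_clab' k' : Shape (set_nlab H c [AInt k']) phi D k'.
Proof.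
  destruct S; constructor; simpl; auto.
  - unfold upd. rewrite Nat.eqb_refl. auto.
  - intros w hw. rewrite sh_updc; auto.
Qed.

Lemma sh_nodeg v u : In v (gV G) -> ~ fixedv v -> ~ In u (remove Nat.eq_dec (phi v) (gV H)) ->
  Shape (add_node (del_node H (phi v)) u (nlab H (phi v)) NUnmarked false) (upd phi v u) D k.
Proof.
  intros hv hf hu.
  assert (hcin : In c (remove Nat.eq_dec (phi v) (gV H))).
  { apply in_in_remove; [|apply (sh_c _ _ _ _ S)]. intros h. apply (sh_nc _ _ _ _ S v hv); auto. }
  assert (huc : u <> c) by (intros ->; contradiction).
  assert (hw' : forall w, In w (gV G) -> w <> v -> In (phi w) (remove Nat.eq_dec (phi v) (gV H))).
  { intros w hw hwv. apply in_in_remove; [|apply (sh_in _ _ _ _ S); auto].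
    intros h. apply hwv. apply (sh_inj _ _ _ _ S); auto. }
  assert (hwu : forall w, In w (gV G) -> w <> v -> phi w <> u).
  { intros w hw hwv h. apply hu. rewrite <- h. auto. }
  destruct S; constructor; simpl; auto.
  - unfold upd. destruct (Nat.eqb_spec c u); congruence.
  - unfold upd. destruct (Nat.eqb_spec c u); congruence.
  - unfold upd. destruct (Nat.eqb_spec c u); congruence.
  - intros w hw. unfold upd. destruct (Nat.eqb_spec w v); [left; auto|right; auto].
  - intros w hw. unfold upd. destruct (Nat.eqb_spec w v); auto.
  - intros w hw. unfold upd at 2. destruct (Nat.eqb_spec w v) as [->|hne].
    + unfold upd. rewrite Nat.eqb_refl. auto.
    + unfold upd. destruct (Nat.eqb_spec (phi w) u); [exfalso; eapply hwu; eauto|auto].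
  - intros w hw. unfold upd at 2. destruct (Nat.eqb_spec w v) as [->|hne].
    + unfold upd. rewrite Nat.eqb_refl. discriminate.
    + unfold upd. destruct (Nat.eqb_spec (phi w) u); [exfalso; eapply hwu; eauto|auto].
  - intros w1 w2 hw1 hw2. unfold upd.
    destruct (Nat.eqb_spec w1 v) as [->|h1]; destruct (Nat.eqb_spec w2 v) as [->|h2]; auto.
    + intros h. exfalso. apply (hwu w2); auto.
    + intros h. exfalso. apply (hwu w1); auto.
  - intros x [<-|hx].
    + right. exists v. split; auto. unfold upd. rewrite Nat.eqb_refl; auto.
    + apply in_remove in hx. destruct hx as [hx hxv].
      destruct (sh_cov0 x hx) as [->|[w [hw <-]]]; [left; auto|right].
      exists w. split; auto. unfold upd. destruct (Nat.eqb_spec w v); subst; [congruence|auto].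
  - intros w hw hfw. unfold upd. destruct (Nat.eqb_spec w v); subst; [contradiction|auto].
Qed.

End ShapeLemmas.

Record Base (k : Z) (H : graph) (phi : nat -> nat) (D : nat -> option Z) (ro : option nat) : Prop := {
 b_sh : Shape H phi D k;
 b_nm : forall v, In v (gV G) -> nmk H (phi v) = NUnmarked \/ nmk H (phi v) = NBlue \/ nmk H (phi v) = NGrey;
 b_fix : forall v, In v (gV G) -> fixedv v -> nmk H (phi v) = NBlue \/ nmk H (phi v) = NGrey;
 b_root : forall v, In v (gV G) -> (nroot H (phi v) = true <-> ro = Some v);
 b_ro : forall u, ro = Some u -> In u (gV G) /\ nmk H (phi u) = NBlue;
 b_eg : forall e, In e (gE G) -> nmk H (phi (src G e)) = NGrey -> emk H e = EBlue;
 b_eb : forall e, In e (gE G) -> nmk H (phi (src G e)) = NBlue -> ro <> Some (src G e) -> emk H e = EUnmarked;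
 b_em : forall e, In e (gE G) -> emk H e = EUnmarked \/ emk H e = ERed \/ emk H e = EBlue;
 b_red : forall e, In e (gE G) -> emk H e = ERed -> ro = Some (src G e);
 b_red1 : forall e e', In e (gE G) -> In e' (gE G) -> emk H e = ERed -> emk H e' = ERed -> e = e' }.

Definition nored (H : graph) := forall e, In e (gE G) -> emk H e <> ERed.

Lemma base_nored k H phi D : Base k H phi D None -> nored H.
Proof. intros B e he hr. pose proof (b_red _ _ _ _ _ B e he hr). discriminate. Qed.

Lemma base_nlab k H phi D ro v a : Base k H phi D ro -> In v (gV G) ->
  Base k (set_nlab H (phi v) (nlab G v ++ [toatom a])) phi (upd D v a) ro.
Proof.
  intros B hv. destruct B; constructor; simpl; auto. apply sh_nlab; auto.
Qed.

Lemma base_clab k H phi D ro k' : Base k H phi D ro -> Base k' (set_nlab H c [AInt k']) phi D ro.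
Proof.
  intros B. destruct B; constructor; simpl; auto. eapply sh_clab'; eauto.
Qed.

Lemma base_srcin k H phi D ro e : Base k H phi D ro -> In e (gE G) -> In (src G e) (gV G).
Proof. intros; apply E_src_in; auto. Qed.

Ltac shupd S := repeat (rewrite (sh_upd _ _ _ _ S) by (auto; try (apply E_src_in; auto); try (apply E_tgt_in; auto))).

Lemma step_root1 k H phi D H' : Base k H phi D None -> rule_app r_root1 H H' ->
  exists v, In v (gV G) /\ nmk H (phi v) = NBlue /\ H' = set_nroot H (phi v) true /\
    Base k H' phi D (Some v).
Proof.
  intros B [x [hx [hb ->]]]. pose proof (b_sh _ _ _ _ _ B) as S.
  destruct (sh_resolve _ _ _ _ S x hx) as [v [hv ->]]; [congruence|].
  exists v. split; auto. split; auto. split; auto.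
  destruct B; constructor; simpl; auto.
  - apply sh_nroot; auto. apply (sh_nc _ _ _ _ S); auto.
  - intros w hw. shupd S. destruct (Nat.eqb_spec w v); subst; [split; auto|].
    rewrite b_root0; auto. split; congruence.
  - intros u hu; inversion hu; subst; auto.
  - intros e he hbl hro. apply b_eb0; auto. discriminate.
  - intros e he hr. pose proof (b_red0 e he hr). discriminate.
Qed.

Lemma step_unroot1 k H phi D u H' : Base k H phi D (Some u) ->
  (forall e, In e (gE G) -> src G e = u -> emk H e = EBlue) -> rule_app r_unroot1 H H' ->
  H' = set_nroot (set_nmk H (phi u) NGrey) (phi u) false /\ Base k H' phi D None.
Proof.
  intros B hall [x [hx [hb [hrt ->]]]]. pose proof (b_sh _ _ _ _ _ B) as S.
  destruct (sh_resolve _ _ _ _ S x hx) as [v [hv ->]]; [congruence|].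
  assert (v = u). { apply (b_root _ _ _ _ _ B v hv) in hrt. congruence. }
  subst v. split; auto.
  destruct B; constructor; simpl; auto.
  - apply sh_nroot; [apply sh_nmk; auto; [apply (sh_nc _ _ _ _ S); auto|discriminate]|].
    apply (sh_nc _ _ _ _ S); auto.
  - intros w hw. shupd S. destruct (Nat.eqb_spec w u); subst; auto.
  - intros w hw hf. shupd S. destruct (Nat.eqb_spec w u); subst; auto.
  - intros w hw. shupd S. destruct (Nat.eqb_spec w u); subst; [split; discriminate|].
    rewrite b_root0; auto. split; congruence.
  - intros w hw; discriminate.
  - intros e he. assert (In (src G e) (gV G)) by (apply E_src_in; auto). shupd S.
    destruct (Nat.eqb_spec (src G e) u); subst; auto.
  - intros e he. assert (In (src G e) (gV G)) by (apply E_src_in; auto). shupd S.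
    destruct (Nat.eqb_spec (src G e) u); subst; [discriminate|]. intros hbl _. apply b_eb0; auto.
    congruence.
  - intros e he hr. exfalso. pose proof (b_red0 e he hr). inversion H0. rewrite (hall e he) in hr; auto.
    discriminate.
Qed.

Lemma step_root2 k H phi D H' : Base k H phi D None -> rule_app r_root2 H H' ->
  exists v, In v (gV G) /\ nmk H (phi v) = NGrey /\
    H' = set_nroot (set_nmk H (phi v) NBlue) (phi v) true /\ Base k H' phi D (Some v).
Proof.
  intros B [x [hx [hg ->]]]. pose proof (b_sh _ _ _ _ _ B) as S.
  destruct (sh_resolve _ _ _ _ S x hx) as [v [hv ->]]; [congruence|].
  exists v. split; auto. split; auto. split; auto.
  destruct B; constructor; simpl; auto.
  - apply sh_nroot; [apply sh_nmk; auto; [apply (sh_nc _ _ _ _ S); auto|discriminate]|].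
    apply (sh_nc _ _ _ _ S); auto.
  - intros w hw. shupd S. destruct (Nat.eqb_spec w v); subst; auto.
  - intros w hw hf. shupd S. destruct (Nat.eqb_spec w v); subst; auto.
  - intros w hw. shupd S. destruct (Nat.eqb_spec w v); subst; [split; auto|].
    rewrite b_root0; auto. split; congruence.
  - intros u hu; inversion hu; subst. split; auto. shupd S. rewrite Nat.eqb_refl; auto.
  - intros e he. assert (In (src G e) (gV G)) by (apply E_src_in; auto). shupd S.
    destruct (Nat.eqb_spec (src G e) v); subst; [discriminate|auto].
  - intros e he. assert (In (src G e) (gV G)) by (apply E_src_in; auto). shupd S.
    destruct (Nat.eqb_spec (src G e) v); subst; [intros _ h; congruence|].
    intros hbl _. apply b_eb0; auto. discriminate.
  - intros e he hr. pose proof (b_red0 e he hr). discriminate.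
Qed.

Lemma step_unroot2 k H phi D u H' : Base k H phi D (Some u) ->
  (forall e, In e (gE G) -> src G e = u -> emk H e = EUnmarked) -> rule_app r_unroot2 H H' ->
  H' = set_nroot H (phi u) false /\ Base k H' phi D None.
Proof.
  intros B hall [x [hx [hb [hrt ->]]]]. pose proof (b_sh _ _ _ _ _ B) as S.
  destruct (sh_resolve _ _ _ _ S x hx) as [v [hv ->]]; [congruence|].
  assert (v = u). { apply (b_root _ _ _ _ _ B v hv) in hrt. congruence. }
  subst v. split; auto.
  destruct B; constructor; simpl; auto.
  - apply sh_nroot; auto. apply (sh_nc _ _ _ _ S); auto.
  - intros w hw. shupd S. destruct (Nat.eqb_spec w u); subst; [split; discriminate|].
    rewrite b_root0; auto. split; congruence.
  - intros w hw; discriminate.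
  - intros e he hbl _. destruct (Nat.eq_dec (src G e) u); [apply hall; auto|apply b_eb0; auto; congruence].
  - intros e he hr. exfalso. pose proof (b_red0 e he hr). inversion H0. rewrite (hall e he) in hr; auto.
    discriminate.
Qed.

Lemma step_nodeg k H phi D u H' : Base k H phi D (Some u) -> rule_app r_no_deg H H' ->
  exists u', ~ fixedv u /\ ~ In u' (remove Nat.eq_dec (phi u) (gV H)) /\
    H' = add_node (del_node H (phi u)) u' (nlab H (phi u)) NUnmarked false /\
    Base k H' (upd phi u u') D None.
Proof.
  intros B [x [u' [hx [hb [hrt [hdang [hu' ->]]]]]]]. pose proof (b_sh _ _ _ _ _ B) as S.
  destruct (sh_resolve _ _ _ _ S x hx) as [v [hv ->]]; [congruence|].
  assert (v = u). { apply (b_root _ _ _ _ _ B v hv) in hrt. congruence. }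
  subst v.
  assert (hnf : ~ fixedv u).
  { intros [->|[e [he [hs|ht]]]].
    - destruct (hdang e0) as [_ h]. rewrite (sh_E _ _ _ _ S); left; auto.
      apply h. rewrite (sh_tgt _ _ _ _ S). unfold upd. rewrite Nat.eqb_refl. symmetry. apply (sh_pr _ _ _ _ S).
    - destruct (hdang e) as [h _]. rewrite (sh_E _ _ _ _ S); right; auto.
      apply h. rewrite (sh_srcH _ _ _ _ S) by auto; try congruence.
    - destruct (hdang e) as [_ h]. rewrite (sh_E _ _ _ _ S); right; auto.
      apply h. rewrite (sh_tgtH _ _ _ _ S) by auto; try congruence. }
  exists u'. split; auto. split; auto. split; auto.
  assert (S' := sh_nodeg _ _ _ _ S u u' hv hnf hu').
  assert (hwu : forall w, In w (gV G) -> w <> u -> phi w <> u').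
  { intros w hw hwv h. apply hu'. rewrite <- h. apply in_in_remove; [|apply (sh_in _ _ _ _ S); auto].
    intros h2. apply hwv. apply (sh_inj _ _ _ _ S); auto. }
  assert (hval : forall A (f : nat -> A) a w, In w (gV G) ->
     upd f u' a (upd phi u u' w) = if Nat.eqb w u then a else f (phi w)).
  { intros A f a w hw. unfold upd at 2. destruct (Nat.eqb_spec w u).
    - unfold upd. rewrite Nat.eqb_refl; auto.
    - unfold upd. destruct (Nat.eqb_spec (phi w) u'); auto. exfalso; eapply hwu; eauto. }
  assert (hfix : forall e, In e (gE G) -> upd phi u u' (src G e) = phi (src G e) /\ src G e <> u).
  { intros e he. assert (src G e <> u) by (intros h; apply hnf; rewrite <- h; apply fix_src; auto).
    unfold upd. destruct (Nat.eqb_spec (src G e) u); [contradiction|auto]. }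
  destruct B; constructor; simpl; auto.
  - intros w hw. rewrite hval; auto. destruct (Nat.eqb_spec w u); auto.
  - intros w hw hf. rewrite hval; auto. destruct (Nat.eqb_spec w u); subst; [contradiction|auto].
  - intros w hw. rewrite hval; auto. destruct (Nat.eqb_spec w u); subst; [split; discriminate|].
    rewrite b_root0; auto. split; congruence.
  - intros w hw; discriminate.
  - intros e he. assert (hs : In (src G e) (gV G)) by (apply E_src_in; auto).
    rewrite (hval _ _ _ _ hs). destruct (Nat.eqb_spec (src G e) u) as [h|h];
    [exfalso; apply (proj2 (hfix e he)); auto|auto].
  - intros e he. assert (hs : In (src G e) (gV G)) by (apply E_src_in; auto).
    rewrite (hval _ _ _ _ hs). destruct (Nat.eqb_spec (src G e) u) as [h|h];
    [exfalso; apply (proj2 (hfix e he)); auto|]. intros hbl _. apply b_eb0; auto. congruence.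
  - intros e he hr. exfalso. pose proof (b_red0 e he hr) as hh. inversion hh.
    destruct (hfix e he); congruence.
Qed.

Lemma edge_decode k H phi D u e v1 : Base k H phi D (Some u) -> In e (gE H) -> emk H e <> EDashed ->
  src H e = v1 -> nroot H v1 = true -> In e (gE G) /\ src G e = u /\ v1 = phi u.
Proof.
  intros B he hd hs hrt. pose proof (b_sh _ _ _ _ _ B) as S.
  assert (he' : In e (gE G)) by (apply (sh_eresolve _ _ _ _ S); auto).
  rewrite (sh_srcH _ _ _ _ S) in hs; auto. subst v1.
  apply (b_root _ _ _ _ _ B) in hrt; [|apply E_src_in; auto]. inversion hrt; subst. auto.
Qed.

Lemma base_emk k H phi D u e m : Base k H phi D (Some u) -> In e (gE G) -> src G e = u ->
  (m = EUnmarked \/ m = ERed \/ m = EBlue) ->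
  (m = ERed -> forall e', In e' (gE G) -> e' <> e -> emk H e' <> ERed) ->
  Base k (set_emk H e m) phi D (Some u).
Proof.
  intros B he hs hm hr. pose proof (b_sh _ _ _ _ _ B) as S.
  destruct B; constructor; simpl; auto.
  - apply sh_emk; auto. apply E_ne; auto.
  - intros e' he' hg. unfold upd. destruct (Nat.eqb_spec e' e); subst; auto.
    exfalso. destruct (b_ro0 (src G e) eq_refl). congruence.
  - intros e' he' hbl hro. unfold upd. destruct (Nat.eqb_spec e' e); subst; [congruence|auto].
  - intros e' he'. unfold upd. destruct (Nat.eqb_spec e' e); subst; auto.
  - intros e' he'. unfold upd. destruct (Nat.eqb_spec e' e); subst; auto.
  - intros e1 e2 h1 h2. unfold upd.
    destruct (Nat.eqb_spec e1 e); destruct (Nat.eqb_spec e2 e); subst; auto.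
    + intros hm1 h. exfalso. apply (hr hm1 e2 h2); auto.
    + intros h hm1. exfalso. apply (hr hm1 e1 h1); auto.
Qed.

Lemma step_umedge k H phi D u H' : Base k H phi D (Some u) -> nored H ->
  rule_app r_unmarked_edge H H' ->
  exists e, In e (gE G) /\ src G e = u /\ emk H e = EUnmarked /\ H' = set_emk H e ERed /\
    Base k H' phi D (Some u).
Proof.
  intros B hnr [v1 [v2 [e [_ [_ [_ [hb [hrt [he [hs [ht [hm ->]]]]]]]]]]]].
  destruct (edge_decode _ _ _ _ _ _ _ B he ltac:(congruence) hs hrt) as [he' [hsu _]].
  exists e. do 4 (split; [auto|]). apply base_emk; auto; intros _ e' he' _; apply hnr; auto.
Qed.

Lemma step_finish k H phi D u H' : Base k H phi D (Some u) -> rule_app r_finish H H' ->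
  exists e, In e (gE G) /\ src G e = u /\ emk H e = ERed /\ H' = set_emk H e EBlue /\
    Base k H' phi D (Some u) /\ nored H'.
Proof.
  intros B [v1 [v2 [e [_ [_ [_ [hb [hrt [he [hs [ht [hm ->]]]]]]]]]]]].
  destruct (edge_decode _ _ _ _ _ _ _ B he ltac:(congruence) hs hrt) as [he' [hsu _]].
  exists e. do 4 (split; [auto|]). split.
  - apply base_emk; auto. intros; discriminate.
  - intros e' he2. simpl. unfold upd. destruct (Nat.eqb_spec e' e); [discriminate|].
    intros hr. apply n. apply (b_red1 _ _ _ _ _ B); auto.
Qed.

Lemma step_unmark_edge k H phi D u H' : Base k H phi D (Some u) -> rule_app r_unmark_edge H H' ->
  exists e, In e (gE G) /\ src G e = u /\ emk H e = EBlue /\ H' = set_emk H e EUnmarked /\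
    Base k H' phi D (Some u).
Proof.
  intros B [v1 [v2 [e [_ [_ [_ [hb [hrt [he [hs [ht [hm ->]]]]]]]]]]]].
  destruct (edge_decode _ _ _ _ _ _ _ B he ltac:(congruence) hs hrt) as [he' [hsu _]].
  exists e. do 4 (split; [auto|]).
  apply base_emk; auto. intros; discriminate.
Qed.

Lemma step_unvisited k H phi D u H' : Base k H phi D (Some u) -> rule_app r_unvisited H H' ->
  exists e s, In e (gE G) /\ src G e = u /\ emk H e = ERed /\ D (src G e) = Some s /\
    D (tgt G e) = None /\
    H' = set_nlab H (phi (tgt G e)) (nlab G (tgt G e) ++ [toatom (Some (s + ew G e))]) /\
    Base k H' phi (upd D (tgt G e) (Some (s + ew G e))) (Some u).
Proof.
  intros B [v1 [v2 [e [xs [ys [s [w [_ [_ [_ [hb [hrt [hl1 [hl2 [he [hs [ht [hm [hel ->]]]]]]]]]]]]]]]]]]].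
  pose proof (b_sh _ _ _ _ _ B) as S.
  destruct (edge_decode _ _ _ _ _ _ _ B he ltac:(congruence) hs hrt) as [he' [hsu hv1]].
  rewrite (sh_tgtH _ _ _ _ S) in ht; auto. subst v2 v1.
  rewrite (sh_elabH _ _ _ _ S) in hel; auto.
  assert (hw : ew G e = w) by (unfold ew; rewrite hel; auto).
  assert (hs' : D (src G e) = Some s).
  { rewrite hv1 in hl1. rewrite hsu. eapply (sh_D_of _ _ _ _ S); [rewrite <- hsu; apply E_src_in; auto|exact hl1]. }
  destruct (sh_D_off _ _ _ _ S (tgt G e) ys (E_tgt_in e he') hl2) as [ht' hys].
  exists e, s. subst ys w. do 6 (split; [auto|]).
  exact (base_nlab _ _ _ _ _ _ (Some (s + ew G e)) B (E_tgt_in e he')).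
Qed.

Lemma step_reduce k H phi D u H' : Base k H phi D (Some u) -> rule_app r_reduce H H' ->
  exists e s t, In e (gE G) /\ src G e = u /\ emk H e = ERed /\ D (src G e) = Some s /\
    D (tgt G e) = Some t /\ s + ew G e < t /\
    H' = set_nlab H (phi (tgt G e)) (nlab G (tgt G e) ++ [toatom (Some (s + ew G e))]) /\
    Base k H' phi (upd D (tgt G e) (Some (s + ew G e))) (Some u).
Proof.
  intros B [v1 [v2 [e [xs [ys [s [t [w [_ [_ [_ [hb [hrt [hl1 [hl2 [he [hs [ht [hm [hel [hlt ->]]]]]]]]]]]]]]]]]]]]].
  pose proof (b_sh _ _ _ _ _ B) as S.
  destruct (edge_decode _ _ _ _ _ _ _ B he ltac:(congruence) hs hrt) as [he' [hsu hv1]].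
  rewrite (sh_tgtH _ _ _ _ S) in ht; auto. subst v2 v1.
  rewrite (sh_elabH _ _ _ _ S) in hel; auto.
  assert (hw : ew G e = w) by (unfold ew; rewrite hel; auto).
  assert (hs' : D (src G e) = Some s).
  { rewrite hv1 in hl1. rewrite hsu. eapply (sh_D_of _ _ _ _ S); [rewrite <- hsu; apply E_src_in; auto|exact hl1]. }
  destruct (sh_D_ofi _ _ _ _ S (tgt G e) ys t (E_tgt_in e he') hl2) as [ht' hys].
  exists e, s, t. subst ys w. do 7 (split; [auto|]).
  exact (base_nlab _ _ _ _ _ _ (Some (s + ew G e)) B (E_tgt_in e he')).
Qed.

Lemma green_c k H phi D ro x : Base k H phi D ro -> In x (gV H) -> nmk H x = NGreen -> x = c.
Proof.
  intros B hx hg. pose proof (b_sh _ _ _ _ _ B) as S.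
  destruct (sh_cov _ _ _ _ S x hx) as [->|[v [hv <-]]]; auto.
  exfalso. apply (sh_ng _ _ _ _ S v hv hg).
Qed.

Lemma step_decr k H phi D ro H' : Base k H phi D ro -> rule_app r_decrement H H' ->
  0 < k /\ H' = set_nlab H c [AInt (k - 1)] /\ Base (k - 1) H' phi D ro.
Proof.
  intros B [x [i [hx [hg [hl [hi ->]]]]]]. pose proof (b_sh _ _ _ _ _ B) as S.
  assert (x = c) by (eapply green_c; eauto). subst x.
  assert (i = k) by (eapply sh_k; eauto). subst i.
  split; [lia|]. split; auto. eapply base_clab; eauto.
Qed.

Lemma step_setflag k H phi D ro H' : Base k H phi D ro -> rule_app r_set_flag H H' ->
  H' = set_nlab H c [AInt (-1)] /\ Base (-1) H' phi D ro.
Proof.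
  intros B [x [hx [hg ->]]]. assert (x = c) by (eapply green_c; eauto). subst x.
  split; auto. eapply base_clab; eauto.
Qed.

Lemma step_flag k H phi D ro H' : Base k H phi D ro -> rule_app r_flag H H' -> k = -1 /\ H' = H.
Proof.
  intros B [x [hx [hg [hl ->]]]]. pose proof (b_sh _ _ _ _ _ B) as S.
  assert (x = c) by (eapply green_c; eauto). subst x.
  split; auto. symmetry; eapply sh_k; eauto.
Qed.


Lemma app_root1 H x : In x (gV H) -> nmk H x = NBlue -> rule_app r_root1 H (set_nroot H x true).
Proof. intros; exists x; auto. Qed.

Lemma app_root2 H x : In x (gV H) -> nmk H x = NGrey ->
  rule_app r_root2 H (set_nroot (set_nmk H x NBlue) x true).
Proof. intros; exists x; auto. Qed.

Lemma app_unroot1 k H phi D u : Base k H phi D (Some u) ->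
  rule_app r_unroot1 H (set_nroot (set_nmk H (phi u) NGrey) (phi u) false).
Proof.
  intros B. destruct (b_ro _ _ _ _ _ B u eq_refl) as [hu hb].
  exists (phi u). repeat split; auto. apply (sh_in _ _ _ _ (b_sh _ _ _ _ _ B)); auto.
  apply (b_root _ _ _ _ _ B); auto.
Qed.

Lemma app_unroot2 k H phi D u : Base k H phi D (Some u) ->
  rule_app r_unroot2 H (set_nroot H (phi u) false).
Proof.
  intros B. destruct (b_ro _ _ _ _ _ B u eq_refl) as [hu hb].
  exists (phi u). repeat split; auto. apply (sh_in _ _ _ _ (b_sh _ _ _ _ _ B)); auto.
  apply (b_root _ _ _ _ _ B); auto.
Qed.

Lemma edge_match k H phi D u e : Base k H phi D (Some u) -> In e (gE G) -> src G e = u ->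
  In (phi u) (gV H) /\ In (phi (tgt G e)) (gV H) /\ phi u <> phi (tgt G e) /\
  nmk H (phi u) = NBlue /\ nroot H (phi u) = true /\ In e (gE H) /\
  src H e = phi u /\ tgt H e = phi (tgt G e).
Proof.
  intros B he hs. pose proof (b_sh _ _ _ _ _ B) as S.
  destruct (b_ro _ _ _ _ _ B u eq_refl) as [hu hb].
  assert (ht : In (tgt G e) (gV G)) by (apply E_tgt_in; auto).
  refine (conj _ (conj _ (conj _ (conj _ (conj _ (conj _ (conj _ _))))))); auto.
  - apply (sh_in _ _ _ _ S); auto.
  - apply (sh_in _ _ _ _ S); auto.
  - subst u. apply (sh_phi_src_ne _ _ _ _ S); auto.
  - apply (b_root _ _ _ _ _ B); auto.
  - rewrite (sh_E _ _ _ _ S). right; auto.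
  - rewrite (sh_srcH _ _ _ _ S) by auto; congruence.
  - rewrite (sh_tgtH _ _ _ _ S); auto.
Qed.

Lemma app_umedge k H phi D u e : Base k H phi D (Some u) -> In e (gE G) -> src G e = u ->
  emk H e = EUnmarked -> rule_app r_unmarked_edge H (set_emk H e ERed).
Proof.
  intros B he hs hm. destruct (edge_match _ _ _ _ _ _ B he hs) as [h1 [h2 [h3 [h4 [h5 [h6 [h7 h8]]]]]]].
  exists (phi u), (phi (tgt G e)), e. repeat split; auto.
Qed.

Lemma app_finish k H phi D u e : Base k H phi D (Some u) -> In e (gE G) -> src G e = u ->
  emk H e = ERed -> rule_app r_finish H (set_emk H e EBlue).
Proof.
  intros B he hs hm. destruct (edge_match _ _ _ _ _ _ B he hs) as [h1 [h2 [h3 [h4 [h5 [h6 [h7 h8]]]]]]].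
  exists (phi u), (phi (tgt G e)), e. repeat split; auto.
Qed.

Lemma app_unmark_edge k H phi D u e : Base k H phi D (Some u) -> In e (gE G) -> src G e = u ->
  emk H e = EBlue -> rule_app r_unmark_edge H (set_emk H e EUnmarked).
Proof.
  intros B he hs hm. destruct (edge_match _ _ _ _ _ _ B he hs) as [h1 [h2 [h3 [h4 [h5 [h6 [h7 h8]]]]]]].
  exists (phi u), (phi (tgt G e)), e. repeat split; auto.
Qed.

Lemma app_unvisited k H phi D u e s : Base k H phi D (Some u) -> In e (gE G) -> src G e = u ->
  emk H e = ERed -> D (src G e) = Some s -> D (tgt G e) = None ->
  exists H', rule_app r_unvisited H H'.
Proof.
  intros B he hs hm hds hdt. pose proof (b_sh _ _ _ _ _ B) as S.
  destruct (edge_match _ _ _ _ _ _ B he hs) as [h1 [h2 [h3 [h4 [h5 [h6 [h7 h8]]]]]]].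
  eexists. exists (phi u), (phi (tgt G e)), e, (nlab G u), (nlab G (tgt G e)), s, (ew G e).
  repeat split; auto.
  - rewrite (sh_lab _ _ _ _ S); [|destruct (b_ro _ _ _ _ _ B u eq_refl); auto]. subst u. rewrite hds. auto.
  - rewrite (sh_lab _ _ _ _ S); [|apply E_tgt_in; auto]. rewrite hdt. auto.
  - rewrite (sh_elabH _ _ _ _ S); auto.
Qed.

Lemma app_reduce k H phi D u e s t : Base k H phi D (Some u) -> In e (gE G) -> src G e = u ->
  emk H e = ERed -> D (src G e) = Some s -> D (tgt G e) = Some t -> s + ew G e < t ->
  exists H', rule_app r_reduce H H'.
Proof.
  intros B he hs hm hds hdt hlt. pose proof (b_sh _ _ _ _ _ B) as S.
  destruct (edge_match _ _ _ _ _ _ B he hs) as [h1 [h2 [h3 [h4 [h5 [h6 [h7 h8]]]]]]].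
  eexists. exists (phi u), (phi (tgt G e)), e, (nlab G u), (nlab G (tgt G e)), s, t, (ew G e).
  repeat split; auto.
  - rewrite (sh_lab _ _ _ _ S); [|destruct (b_ro _ _ _ _ _ B u eq_refl); auto]. subst u. rewrite hds. auto.
  - rewrite (sh_lab _ _ _ _ S); [|apply E_tgt_in; auto]. rewrite hdt. auto.
  - rewrite (sh_elabH _ _ _ _ S); auto.
Qed.

Lemma app_decr k H phi D ro : Base k H phi D ro -> 0 < k ->
  rule_app r_decrement H (set_nlab H c [AInt (k - 1)]).
Proof.
  intros B hk. pose proof (b_sh _ _ _ _ _ B) as S. exists c, k.
  repeat split; auto; [apply (sh_c _ _ _ _ S)|apply (sh_cmk _ _ _ _ S)|apply (sh_clab _ _ _ _ S)].
Qed.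

Lemma app_setflag k H phi D ro : Base k H phi D ro -> rule_app r_set_flag H (set_nlab H c [AInt (-1)]).
Proof.
  intros B. pose proof (b_sh _ _ _ _ _ B) as S. exists c.
  repeat split; auto; [apply (sh_c _ _ _ _ S)|apply (sh_cmk _ _ _ _ S)].
Qed.

Lemma app_flag H phi D ro : Base (-1) H phi D ro -> rule_app r_flag H H.
Proof.
  intros B. pose proof (b_sh _ _ _ _ _ B) as S. exists c.
  repeat split; auto; [apply (sh_c _ _ _ _ S)|apply (sh_cmk _ _ _ _ S)|apply (sh_clab _ _ _ _ S)].
Qed.

Lemma mcnt_nmk_lt f H x m : In x (gV H) -> f (nmk H x) = true -> f m = false ->
  (mcnt f (set_nmk H x m) < mcnt f H)%nat.
Proof.
  intros hx h1 h2. unfold mcnt. simpl.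
  eapply (filt_lt (fun y => f (nmk H y)) (fun y => f (upd (nmk H) x m y))); [exact hx|exact h1|unfold upd; rewrite Nat.eqb_refl; auto|].
  intros y _. unfold upd. destruct (Nat.eqb_spec y x); subst; auto; congruence.
Qed.

Lemma mcnt_nmk_le f H x m : f m = false -> (mcnt f (set_nmk H x m) <= mcnt f H)%nat.
Proof.
  intros h2. unfold mcnt. simpl. apply filt_mono.
  intros y _. unfold upd. destruct (Nat.eqb_spec y x); subst; auto; congruence.
Qed.

Lemma mcnt_nodeg_lt f H x u l m b : In x (gV H) -> f (nmk H x) = true -> f m = false ->
  (mcnt f (add_node (del_node H x) u l m b) < mcnt f H)%nat.
Proof.
  intros hx h1 h2. unfold mcnt. simpl. unfold upd at 1. rewrite Nat.eqb_refl, h2.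
  eapply Nat.le_lt_trans; [|apply (filt_remove_lt (fun y => f (nmk H y)) (gV H) x); auto].
  apply filt_mono. intros y _. unfold upd. destruct (Nat.eqb_spec y u); subst; auto; congruence.
Qed.

Lemma ecnt_emk_lt f H e m : In e (gE H) -> f (emk H e) = true -> f m = false ->
  (ecnt f (set_emk H e m) < ecnt f H)%nat.
Proof.
  intros hx h1 h2. unfold ecnt. simpl.
  eapply (filt_lt (fun y => f (emk H y)) (fun y => f (upd (emk H) e m y))); [exact hx|exact h1|unfold upd; rewrite Nat.eqb_refl; auto|].
  intros y _. unfold upd. destruct (Nat.eqb_spec y e); subst; auto; congruence.
Qed.

Lemma ecnt_emk_le f H e m : f m = false -> (ecnt f (set_emk H e m) <= ecnt f H)%nat.
Proof.
  intros h2. unfold ecnt. simpl. apply filt_mono.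
  intros y _. unfold upd. destruct (Nat.eqb_spec y e); subst; auto; congruence.
Qed.


Lemma le_oz_trans a b d : le_oz a b -> le_oz b d -> le_oz a d.
Proof. destruct a, b, d; simpl; auto; try tauto; lia. Qed.
Lemma le_oz_refl a : le_oz a a.
Proof. destruct a; simpl; auto; lia. Qed.

Record PassX (D0 : nat -> option Z) (H : graph) (D : nat -> option Z) (rd : bool) : Prop := {
  px_blue : forall e, In e (gE G) -> emk H e = EBlue -> relaxed D0 D e;
  px_red : forall e, In e (gE G) -> emk H e = ERed -> rd = true -> relaxed D0 D e;
  px_sound : Sound D;
  px_le : forall v, In v (gV G) -> le_oz (D v) (D0 v) }.

Lemma px_same D0 H H' D rd : PassX D0 H D rd -> emk H' = emk H -> PassX D0 H' D rd.
Proof. intros P h. destruct P; constructor; rewrite ?h; auto. Qed.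

Lemma px_umedge D0 H D rd e : PassX D0 H D rd -> emk H e = EUnmarked ->
  PassX D0 (set_emk H e ERed) D false.
Proof.
  intros P h. destruct P; constructor; simpl; auto.
  - intros e' he'. unfold upd. destruct (Nat.eqb_spec e' e); [discriminate|auto].
  - intros; discriminate.
Qed.

Lemma px_finish D0 H D e : PassX D0 H D true -> In e (gE G) -> emk H e = ERed ->
  PassX D0 (set_emk H e EBlue) D true.
Proof.
  intros P he h. destruct P; constructor; simpl; auto.
  - intros e' he'. unfold upd. destruct (Nat.eqb_spec e' e); subst; auto.
  - intros e' he'. unfold upd. destruct (Nat.eqb_spec e' e); subst; [discriminate|auto].
Qed.

Lemma px_relax D0 H H' D rd e s : PassX D0 H D rd -> emk H' = emk H -> In e (gE G) ->
  emk H e = ERed -> (forall e', In e' (gE G) -> emk H e' = ERed -> e' = e) ->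
  D (src G e) = Some s -> le_oz (Some (s + ew G e)) (D (tgt G e)) ->
  PassX D0 H' (upd D (tgt G e) (Some (s + ew G e))) true.
Proof.
  intros P hm he hr huniq hs hle. destruct P as [pb pr ps pl]. constructor; rewrite ?hm.
  - intros e' he' hb. specialize (pb e' he' hb). unfold relaxed in *. unfold upd.
    destruct (Nat.eqb_spec (tgt G e') (tgt G e)) as [h|h].
    + rewrite <- h in hle. eapply le_oz_trans; eauto.
    + auto.
  - intros e' he' hr' _. rewrite (huniq e' he' hr'). unfold relaxed. unfold upd.
    rewrite Nat.eqb_refl. assert (hsn : src G e <> tgt G e) by auto.
    pose proof (pl (src G e) (E_src_in e he)) as hl. rewrite hs in hl.
    destruct (D0 (src G e)) as [s0|]; simpl in *; auto. lia.
  - intros v d hv hd. unfold upd in hd. destruct (Nat.eqb_spec v (tgt G e)) as [->|h].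
    + inversion hd; subst. destruct (ps (src G e) s (E_src_in e he) hs) as [p [hw hwt]].
      exists (p ++ [e]). split.
      * apply walk_app. exists (src G e). split; auto. simpl. auto.
      * rewrite weight_app. simpl. lia.
    + apply ps; auto.
  - intros v hv. unfold upd. destruct (Nat.eqb_spec v (tgt G e)) as [->|h]; auto.
    eapply le_oz_trans; eauto.
Qed.

Definition RBody := Seq (Call [r_unmarked_edge]) (Seq (Try (Call [r_unvisited; r_reduce]) Skip Skip) (Call [r_finish])).
Definition REdge := Loop RBody.

Definition REI D0 k u n0 H := exists phi D, Base k H phi D (Some u) /\ nored H /\ PassX D0 H D true /\ mcnt nB H = n0.
Definition RMid D0 k u n0 rd H := exists phi D e, Base k H phi D (Some u) /\ PassX D0 H D rd /\
  mcnt nB H = n0 /\ In e (gE G) /\ src G e = u /\ emk H e = ERed.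

Lemma in1 {A : Type} (x y : A) : In x [y] -> x = y.
Proof. intros [h|[]]; auto. Qed.

Lemma safe_RTry D0 k u n0 : safe (Try (Call [r_unvisited; r_reduce]) Skip Skip) (RMid D0 k u n0 false)
  (fun H o => match o with Res H2 => RMid D0 k u n0 true H2 /\ ecnt eU H2 = ecnt eU H | Fail => False end).
Proof.
  eapply safe_try2 with
    (MC := fun H o => match o with Res H2 => RMid D0 k u n0 true H2 /\ ecnt eU H2 = ecnt eU H
                                   | Fail => RMid D0 k u n0 true H end)
    (PreP := RMid D0 k u n0 true) (NP := fun H o => o = Res H) (NQ := fun H o => o = Res H).
  - apply safe_call.
    + intros H [phi [D [e [B [P [hn [he [hs hr]]]]]]]] rl H' hin happ.
      assert (huniq : forall e', In e' (gE G) -> emk H e' = ERed -> e' = e).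
      { intros e' he' hr'. apply (b_red1 _ _ _ _ _ B); auto. }
      destruct hin as [<-|[<-|[]]].
      * destruct (step_unvisited _ _ _ _ _ _ B happ) as [e1 [s [he1 [hs1 [hr1 [hd1 [hd2 [-> B']]]]]]]].
        assert (e1 = e) by auto. subst e1.
        split; [|reflexivity]. exists phi, (upd D (tgt G e) (Some (s + ew G e))), e.
        split; auto. split.
        { eapply px_relax; eauto. rewrite hd2; simpl; auto. }
        split; auto.
      * destruct (step_reduce _ _ _ _ _ _ B happ) as [e1 [s [t [he1 [hs1 [hr1 [hd1 [hd2 [hlt [-> B']]]]]]]]]].
        assert (e1 = e) by auto. subst e1.
        split; [|reflexivity]. exists phi, (upd D (tgt G e) (Some (s + ew G e))), e.
        split; auto. split.
        { eapply px_relax; eauto. rewrite hd2; simpl; lia. }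
        split; auto.
    + intros H [phi [D [e [B [P [hn [he [hs hr]]]]]]]] hfail.
      exists phi, D, e. split; auto. split; auto.
      destruct P as [pb pr ps pl]. constructor; auto. intros e' he' hr' _.
      assert (e' = e) by (apply (b_red1 _ _ _ _ _ B); auto). subst e'.
      unfold relaxed. pose proof (pl (src G e) (E_src_in e he)) as hl.
      destruct (D (src G e)) as [s|] eqn:hds.
      * destruct (D (tgt G e)) as [t|] eqn:hdt.
        -- destruct (Z_lt_ge_dec (s + ew G e) t) as [hlt|hge].
           ++ exfalso. destruct (app_reduce _ _ _ _ _ _ s t B he hs hr hds hdt hlt) as [H' ha].
              apply (hfail r_reduce H'); simpl; auto.
           ++ destruct (D0 (src G e)); simpl in *; auto. lia.
        -- exfalso. destruct (app_unvisited _ _ _ _ _ _ s B he hs hr hds hdt) as [H' ha].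
           apply (hfail r_unvisited H'); simpl; auto.
      * destruct (D0 (src G e)); simpl in *; auto. tauto.
  - apply safe_skip.
  - apply safe_skip.
  - intros H H1 _ [h _]. exact h.
  - intros H H1 o _ [h1 h2] ->. split; auto.
  - intros H o _ h ->. split; auto.
Qed.

Lemma safe_RBody D0 k u n0 : safe RBody (REI D0 k u n0)
  (fun H o => match o with Res H1 => REI D0 k u n0 H1 /\ (ecnt eU H1 < ecnt eU H)%nat
   | Fail => forall e, In e (gE G) -> src G e = u -> emk H e <> EUnmarked end).
Proof.
  eapply safe_seq2 with
    (M := fun H o => match o with Res H1 => RMid D0 k u n0 false H1 /\ (ecnt eU H1 < ecnt eU H)%nat
          | Fail => forall e, In e (gE G) -> src G e = u -> emk H e <> EUnmarked end)
    (MidP := RMid D0 k u n0 false)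
    (N := fun H1 o => match o with Res H2 => REI D0 k u n0 H2 /\ (ecnt eU H2 <= ecnt eU H1)%nat
          | Fail => False end).
  - apply safe_call.
    + intros H [phi [D [B [hnr [P hn]]]]] rl H' hin happ. apply in1 in hin; subst rl.
      destruct (step_umedge _ _ _ _ _ _ B hnr happ) as [e [he [hs [hm [-> B']]]]].
      split.
      * exists phi, D, e. split; auto. split; [eapply px_umedge; eauto|]. split; auto.
        split; auto. split; auto. simpl. unfold upd. rewrite Nat.eqb_refl. auto.
      * apply ecnt_emk_lt; auto; [|rewrite hm; auto].
        rewrite (sh_E _ _ _ _ (b_sh _ _ _ _ _ B)). right; auto.
    + intros H [phi [D [B [hnr [P hn]]]]] hfail e he hs hm.
      apply (hfail r_unmarked_edge (set_emk H e ERed)); [left; auto|].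
      eapply app_umedge; eauto.
  - eapply safe_seq2 with
      (M := fun H1 o => match o with Res H2 => RMid D0 k u n0 true H2 /\ ecnt eU H2 = ecnt eU H1
            | Fail => False end)
      (MidP := RMid D0 k u n0 true)
      (N := fun H2 o => match o with Res H3 => REI D0 k u n0 H3 /\ (ecnt eU H3 <= ecnt eU H2)%nat
            | Fail => False end).
    + apply safe_RTry.
    + apply safe_call.
      * intros H [phi [D [e [B [P [hn [he [hs hr]]]]]]]] rl H' hin happ. apply in1 in hin; subst rl.
        destruct (step_finish _ _ _ _ _ _ B happ) as [e1 [he1 [hs1 [hm1 [-> [B' hnr']]]]]].
        assert (e1 = e) by (apply (b_red1 _ _ _ _ _ B); auto). subst e1.
        split.
        -- exists phi, D. split; auto. split; auto. split; [apply px_finish; auto|]. auto.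
        -- apply ecnt_emk_le; auto.
      * intros H [phi [D [e [B [P [hn [he [hs hr]]]]]]]] hfail.
        apply (hfail r_finish (set_emk H e EBlue)); [left; auto|]. eapply app_finish; eauto.
    + intros H H1 _ [h _]; exact h.
    + intros H _ [].
    + intros H H1 [H2|] _ [_ h1] h2; [|destruct h2]. destruct h2 as [h2 h3]. split; auto. lia.
  - intros H H1 _ [h _]; exact h.
  - intros H _ h; exact h.
  - intros H H1 [H2|] _ [_ h1] h2; [|destruct h2]. destruct h2 as [h2 h3]. split; auto. lia.
Qed.

Lemma safe_REdge D0 k u n0 : safe REdge (REI D0 k u n0)
  (fun _ o => exists H1, o = Res H1 /\ REI D0 k u n0 H1 /\
     (forall e, In e (gE G) -> src G e = u -> emk H1 e <> EUnmarked)).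
Proof.
  apply (safe_loop RBody (REI D0 k u n0) _ (ecnt eU)). apply safe_RBody.
Qed.


Definition noblue H := forall x, In x (gV H) -> nmk H x <> NBlue.
Definition nogrey H := forall x, In x (gV H) -> nmk H x <> NGrey.
Definition RI D0 k H := exists phi D, Base k H phi D None /\ PassX D0 H D true.
Definition RR D0 k H := exists phi D u, Base k H phi D (Some u) /\ nored H /\ PassX D0 H D true.

Lemma safe_RU D0 k u n0 : safe (Seq REdge (Call [r_unroot1])) (REI D0 k u n0)
  (fun _ o => match o with Res H2 => RI D0 k H2 /\ (mcnt nB H2 < n0)%nat | Fail => False end).
Proof.
  eapply safe_seq2 with (MidP := fun H1 => REI D0 k u n0 H1 /\
      (forall e, In e (gE G) -> src G e = u -> emk H1 e <> EUnmarked))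
    (N := fun H1 o => match o with Res H2 => RI D0 k H2 /\ (mcnt nB H2 < n0)%nat | Fail => False end).
  - apply safe_REdge.
  - apply safe_call.
    + intros H [[phi [D [B [hnr [P hn]]]]] hall] rl H' hin happ. apply in1 in hin; subst rl.
      assert (hb : forall e, In e (gE G) -> src G e = u -> emk H e = EBlue).
      { intros e he hs. destruct (b_em _ _ _ _ _ B e he) as [h|[h|h]]; auto.
        - exfalso; apply (hall e he hs h).
        - exfalso; apply (hnr e he h). }
      destruct (step_unroot1 _ _ _ _ _ _ B hb happ) as [-> B'].
      split.
      * exists phi, D. split; auto. eapply px_same; eauto.
      * subst n0. destruct (b_ro _ _ _ _ _ B u eq_refl) as [hu hbl].
        apply (mcnt_nmk_lt nB H (phi u) NGrey); auto.
        apply (sh_in _ _ _ _ (b_sh _ _ _ _ _ B)); auto. rewrite hbl; auto.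
    + intros H [[phi [D [B [hnr [P hn]]]]] hall] hfail.
      eapply (hfail r_unroot1 _ (or_introl eq_refl)). eapply app_unroot1; eauto.
  - intros H H1 _ [H2 [e [h1 h2]]]. inversion e; subst; auto.
  - intros H _ [H2 [e _]]; discriminate.
  - intros H H1 o _ _ h; exact h.
Qed.

Lemma safe_Relax D0 k : safe Relax (RI D0 k)
  (fun H o => match o with Res H1 => RI D0 k H1 /\ (mcnt nB H1 < mcnt nB H)%nat | Fail => noblue H end).
Proof.
  unfold Relax. eapply safe_seq2 with
    (M := fun H o => match o with Res H1 => RR D0 k H1 /\ mcnt nB H1 = mcnt nB H | Fail => noblue H end)
    (MidP := RR D0 k)
    (N := fun H1 o => match o with Res H2 => RI D0 k H2 /\ (mcnt nB H2 < mcnt nB H1)%nat | Fail => False end).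
  - apply safe_call.
    + intros H [phi [D [B P]]] rl H' hin happ. apply in1 in hin; subst rl.
      destruct (step_root1 _ _ _ _ _ B happ) as [v [hv [hb [-> B']]]].
      split; [|reflexivity]. exists phi, D, v. split; auto. split.
      * apply (base_nored _ _ _ _ B).
      * eapply px_same; eauto.
    + intros H _ hfail x hx hb. eapply (hfail r_root1 _ (or_introl eq_refl)). apply app_root1; eauto.
  - eapply safe_try2 with
      (MC := fun H o => match o with Res H2 => RI D0 k H2 /\ (mcnt nB H2 < mcnt nB H)%nat | Fail => True end)
      (PreP := fun _ => True) (NP := fun H o => o = Res H)
      (NQ := fun H o => match o with Res H2 => RI D0 k H2 /\ (mcnt nB H2 < mcnt nB H)%nat | Fail => False end).
    + apply safe_call.
      * intros H [phi [D [u [B [hnr P]]]]] rl H' hin happ. apply in1 in hin; subst rl.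
        destruct (step_nodeg _ _ _ _ _ _ B happ) as [u' [hnf [hu' [-> B']]]].
        split.
        -- exists (upd phi u u'), D. split; auto. eapply px_same; eauto.
        -- destruct (b_ro _ _ _ _ _ B u eq_refl) as [hu hbl].
           apply mcnt_nodeg_lt; auto. apply (sh_in _ _ _ _ (b_sh _ _ _ _ _ B)); auto.
           rewrite hbl; auto.
      * intros; exact I.
    + apply safe_skip.
    + intros H hpre. destruct hpre as [[phi [D [u [B [hnr P]]]]] _].
      assert (hI : REI D0 k u (mcnt nB H) H) by (exists phi, D; auto).
      destruct (safe_RU D0 k u (mcnt nB H) H hI) as [t o]. split; auto.
    + intros; exact I.
    + intros H H1 o _ h ->. exact h.
    + intros H o _ _ h. exact h.
  - intros H H1 _ [h _]; exact h.
  - intros H _ h; exact h.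
  - intros H H1 [H2|] _ [_ h1] h2; [|destruct h2]. destruct h2 as [h2 h3]. split; auto. lia.
Qed.

Lemma safe_RelaxL D0 k : safe (Loop Relax) (RI D0 k)
  (fun _ o => exists H1, o = Res H1 /\ RI D0 k H1 /\ noblue H1).
Proof. apply (safe_loop Relax (RI D0 k) _ (mcnt nB)). apply safe_Relax. Qed.

Definition CI k D H := exists phi, Base k H phi D None.
Definition CR k D u n1 H := (exists phi, Base k H phi D (Some u) /\ nored H) /\ mcnt nG H = n1.

Lemma safe_UE k D u n1 : safe (Loop (Call [r_unmark_edge])) (CR k D u n1)
  (fun _ o => exists H1, o = Res H1 /\ CR k D u n1 H1 /\
     (forall e, In e (gE G) -> src G e = u -> emk H1 e <> EBlue)).
Proof.
  apply (safe_loop _ (CR k D u n1) _ (ecnt eB)). apply safe_call.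
  - intros H [[phi [B hnr]] hn] rl H' hin happ. apply in1 in hin; subst rl.
    destruct (step_unmark_edge _ _ _ _ _ _ B happ) as [e [he [hs [hm [-> B']]]]].
    split.
    + split; auto. exists phi. split; auto. intros e' he'. simpl. unfold upd.
      destruct (Nat.eqb_spec e' e); [discriminate|auto].
    + apply ecnt_emk_lt; auto; [|rewrite hm; auto].
      rewrite (sh_E _ _ _ _ (b_sh _ _ _ _ _ B)). right; auto.
  - intros H [[phi [B hnr]] hn] hfail e he hs hm.
    eapply (hfail r_unmark_edge _ (or_introl eq_refl)). eapply app_unmark_edge; eauto.
Qed.

Lemma safe_Clean k D : safe Clean (CI k D)
  (fun H o => match o with Res H1 => CI k D H1 /\ (mcnt nG H1 < mcnt nG H)%nat | Fail => nogrey H end).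
Proof.
  unfold Clean. eapply safe_seq2 with
    (M := fun H o => match o with Res H1 => (exists u, CR k D u (mcnt nG H1) H1) /\
            (mcnt nG H1 < mcnt nG H)%nat | Fail => nogrey H end)
    (MidP := fun H1 => exists u, CR k D u (mcnt nG H1) H1)
    (N := fun H1 o => match o with Res H2 => CI k D H2 /\ (mcnt nG H2 <= mcnt nG H1)%nat | Fail => False end).
  - apply safe_call.
    + intros H [phi B] rl H' hin happ. apply in1 in hin; subst rl.
      destruct (step_root2 _ _ _ _ _ B happ) as [v [hv [hg [-> B']]]].
      split.
      * exists v. split; auto. exists phi. split; auto. apply (base_nored _ _ _ _ B).
      * apply (mcnt_nmk_lt nG H (phi v) NBlue); auto.
        apply (sh_in _ _ _ _ (b_sh _ _ _ _ _ B)); auto. rewrite hg; auto.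
    + intros H _ hfail x hx hg. eapply (hfail r_root2 _ (or_introl eq_refl)). apply app_root2; eauto.
  - intros H1 [u hcr]. revert H1 hcr. 
    assert (forall n1, safe (Seq (Loop (Call [r_unmark_edge])) (Call [r_unroot2])) (CR k D u n1)
      (fun _ o => match o with Res H2 => CI k D H2 /\ (mcnt nG H2 <= n1)%nat | Fail => False end)).
    { intros n1. eapply safe_seq2 with
        (MidP := fun H1 => CR k D u n1 H1 /\ (forall e, In e (gE G) -> src G e = u -> emk H1 e <> EBlue))
        (N := fun H1 o => match o with Res H2 => CI k D H2 /\ (mcnt nG H2 <= n1)%nat | Fail => False end).
      - apply safe_UE.
      - apply safe_call.
        + intros H [[[phi [B hnr]] hn] hall] rl H' hin happ. apply in1 in hin; subst rl.
          assert (hu : forall e, In e (gE G) -> src G e = u -> emk H e = EUnmarked).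
          { intros e he hs. destruct (b_em _ _ _ _ _ B e he) as [h|[h|h]]; auto.
            - exfalso; apply (hnr e he h).
            - exfalso; apply (hall e he hs h). }
          destruct (step_unroot2 _ _ _ _ _ _ B hu happ) as [-> B'].
          split; [exists phi; auto|]. simpl. subst n1. unfold mcnt. simpl. lia.
        + intros H [[[phi [B hnr]] hn] hall] hfail.
          eapply (hfail r_unroot2 _ (or_introl eq_refl)). eapply app_unroot2; eauto.
      - intros H H1 _ [H2 [e [h1 h2]]]. inversion e; subst; auto.
      - intros H _ [H2 [e _]]; discriminate.
      - intros H H1 o _ _ h; exact h. }
    intros H1 hcr. destruct (H (mcnt nG H1) H1 hcr) as [t o]. split; auto.
  - intros H H1 _ [h _]; exact h.
  - intros H _ h; exact h.
  - intros H H1 [H2|] _ [_ h1] h2; [|destruct h2]. destruct h2 as [h2 h3]. split; auto. lia.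
Qed.

Lemma safe_CleanL k D : safe (Loop Clean) (CI k D)
  (fun _ o => exists H1, o = Res H1 /\ CI k D H1 /\ nogrey H1).
Proof. apply (safe_loop Clean (CI k D) _ (mcnt nG)). apply safe_Clean. Qed.


Lemma compl_step D0 D np : Compl D0 np -> (forall e, In e (gE G) -> relaxed D0 D e) ->
  (forall v, In v (gV G) -> le_oz (D v) (D0 v)) -> Compl D (S np).
Proof.
  intros hc hr hl v p hw hlen.
  destruct p as [|a p'] using rev_ind.
  - simpl in hw. subst v. eapply le_oz_trans; [apply hl; auto|]. apply (hc r [] eq_refl). simpl; lia.
  - clear IHp'. apply walk_app in hw. destruct hw as [x [hw1 [he [hs ht]]]]. subst x.
    simpl in ht. subst v. rewrite length_app in hlen. simpl in hlen.
    pose proof (hc (src G a) p' hw1 ltac:(lia)) as h1.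
    pose proof (hr a he) as h2. unfold relaxed in h2.
    destruct (D0 (src G a)) as [s0|]; simpl in h1; [|tauto].
    simpl in h2. rewrite weight_app. simpl.
    destruct (D (tgt G a)); simpl in *; [lia|tauto].
Qed.

Definition allunm H := forall e, In e (gE G) -> emk H e = EUnmarked.

Lemma safe_pass D0 k np : Sound D0 -> Compl D0 np ->
  safe (Seq (Loop Relax) (Loop Clean)) (fun H => exists phi, Base k H phi D0 None /\ allunm H)
  (fun _ o => match o with Res H2 => exists phi D, Base k H2 phi D None /\ allunm H2 /\
      Sound D /\ Compl D (S np) | Fail => False end).
Proof.
  intros hs hc. eapply safe_seq2 with
    (M := fun _ o => exists H1, o = Res H1 /\ RI D0 k H1 /\ noblue H1)
    (MidP := fun H1 => exists D, CI k D H1 /\ Sound D /\ Compl D (S np))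
    (N := fun _ o => match o with Res H2 => exists phi D, Base k H2 phi D None /\ allunm H2 /\
      Sound D /\ Compl D (S np) | Fail => False end).
  - eapply safe_conseq; [apply (safe_RelaxL D0 k)| |].
    + intros H [phi [B hu]]. exists phi, D0. split; auto. constructor; auto.
      * intros e he hb. rewrite hu in hb; auto. discriminate.
      * intros e he hb. rewrite hu in hb; auto. discriminate.
      * intros v hv. apply le_oz_refl.
    + intros H o _ h; exact h.
  - intros H1 [D [[phi B] [hsD hcD]]].
    destruct (safe_CleanL k D H1 (ex_intro _ phi B)) as [t o]. split; auto.
    intros o' hx. destruct (o o' hx) as [H2 [-> [[phi2 B2] hng]]].
    exists phi2, D. split; auto. split; auto.
    intros e he. pose proof (b_sh _ _ _ _ _ B2) as S2.
    assert (hsv : In (src G e) (gV G)) by (apply E_src_in; auto).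
    destruct (b_fix _ _ _ _ _ B2 (src G e) hsv (fix_src e he)) as [h|h].
    + apply (b_eb _ _ _ _ _ B2); auto. discriminate.
    + exfalso. apply (hng (phi2 (src G e))); auto. apply (sh_in _ _ _ _ S2); auto.
  - intros H H1 _ [H2 [e [[phi [D [B P]]] hnb]]]. inversion e; subst H2.
    exists D. split; [exists phi; auto|]. split; [apply (px_sound _ _ _ _ P)|].
    pose proof (b_sh _ _ _ _ _ B) as S.
    apply (compl_step D0); auto; [|apply (px_le _ _ _ _ P)].
    intros e' he'. apply (px_blue _ _ _ _ P); auto.
    assert (hsv : In (src G e') (gV G)) by (apply E_src_in; auto).
    apply (b_eg _ _ _ _ _ B); auto.
    destruct (b_fix _ _ _ _ _ B (src G e') hsv (fix_src e' he')) as [h|h]; auto.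
    exfalso. apply (hnb (phi (src G e'))); auto. apply (sh_in _ _ _ _ S); auto.
  - intros H _ [H2 [e _]]; discriminate.
  - intros H H1 o _ _ h; exact h.
Qed.

Definition nV := Z.of_nat (length (gV G)).
Definition mc H := match nlab H c with [AInt k] => Z.to_nat k | _ => O end.
Definition MBody := Seq (Call [r_decrement]) (Seq (Loop Relax) (Loop Clean)).
Definition LoopI H := exists phi D k np, Base k H phi D None /\ allunm H /\ Sound D /\ Compl D np /\
  0 <= k /\ Z.of_nat np + k = nV - 1.
Definition kstop H := forall i, nlab H c = [AInt i] -> i <= 0.

Lemma safe_MBody phi D k np : Sound D -> Compl D np -> 0 <= k -> Z.of_nat np + k = nV - 1 ->
  safe MBody (fun H => Base k H phi D None /\ allunm H)
  (fun H o => match o with Res H2 => LoopI H2 /\ (mc H2 < mc H)%nat | Fail => kstop H end).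
Proof.
  intros hs hc hk hn. eapply safe_seq2 with
    (M := fun H o => match o with Res H1 => Base (k - 1) H1 phi D None /\ allunm H1 /\ 0 < k
          | Fail => kstop H end)
    (MidP := fun H1 => exists phi', Base (k - 1) H1 phi' D None /\ allunm H1)
    (N := fun _ o => match o with Res H2 => exists phi D, Base (k - 1) H2 phi D None /\ allunm H2 /\
      Sound D /\ Compl D (S np) | Fail => False end).
  - apply safe_call.
    + intros H [B hu] rl H' hin happ. apply in1 in hin; subst rl.
      destruct (step_decr _ _ _ _ _ _ B happ) as [hk' [-> B']]. auto.
    + intros H [B hu] hfail i hi. destruct (Z_le_gt_dec i 0) as [h|h]; auto.
      exfalso. assert (i = k) by (eapply sh_k; [apply (b_sh _ _ _ _ _ B)|]; eauto). subst i.
      eapply (hfail r_decrement _ (or_introl eq_refl)). eapply app_decr; eauto. lia.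
  - apply safe_pass; auto.
  - intros H H1 _ [B [hu _]]. eauto.
  - intros H _ h; exact h.
  - intros H H1 [H2|] [B _] [B1 [hu1 hk']] h; [|destruct h].
    destruct h as [phi2 [D2 [B2 [hu2 [hs2 hc2]]]]]. split.
    + exists phi2, D2, (k - 1), (S np). do 4 (split; [auto|]). split; lia.
    + unfold mc. rewrite (sh_clab _ _ _ _ (b_sh _ _ _ _ _ B2)), (sh_clab _ _ _ _ (b_sh _ _ _ _ _ B)). lia.
Qed.

Lemma safe_MainLoop : safe (Loop MBody) LoopI (fun _ o => exists H1, o = Res H1 /\ LoopI H1 /\ kstop H1).
Proof.
  apply (safe_loop MBody LoopI kstop mc).
  intros H [phi [D [k [np [B [hu [hs [hc [hk hn]]]]]]]]].
  apply (safe_MBody phi D k np hs hc hk hn H). auto.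
Qed.


Record FinX (H : graph) (D : nat -> option Z) (k : Z) (rd : bool) : Prop := {
  fx_k : k = 0 \/ k = -1;
  fx_kex : k = -1 -> exists e, In e (gE G) /\ reducible D e;
  fx_blue : forall e, In e (gE G) -> emk H e = EBlue -> reducible D e -> k = -1;
  fx_red : forall e, In e (gE G) -> emk H e = ERed -> rd = true -> reducible D e -> k = -1 }.

Lemma fx_same H H' D k rd : FinX H D k rd -> emk H' = emk H -> FinX H' D k rd.
Proof. intros F h. destruct F; constructor; rewrite ?h; auto. Qed.

Definition FBody := Seq (Call [r_unmarked_edge]) (Seq (If (Call [r_reduce]) (Call [r_set_flag]) Skip) (Call [r_finish])).
Definition FEdge := Loop FBody.
Definition FOuter := Loop (Seq (Call [r_root1]) (Seq FEdge (Call [r_unroot1]))).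

Definition FEI D u n0 H := exists phi k, Base k H phi D (Some u) /\ nored H /\ FinX H D k true /\ mcnt nB H = n0.
Definition FMid D u n0 rd H := exists phi k e, Base k H phi D (Some u) /\ FinX H D k rd /\
  mcnt nB H = n0 /\ In e (gE G) /\ src G e = u /\ emk H e = ERed.

Lemma safe_FIf D u n0 : safe (If (Call [r_reduce]) (Call [r_set_flag]) Skip) (FMid D u n0 false)
  (fun H o => match o with Res H2 => FMid D u n0 true H2 /\ ecnt eU H2 = ecnt eU H | Fail => False end).
Proof.
  eapply safe_if with
    (MC := fun H o => match o with Res _ => exists e, In e (gE G) /\ reducible D e
           | Fail => forall e, In e (gE G) -> emk H e = ERed -> ~ reducible D e end)
    (NP := fun H o => match o with Res H2 => FMid D u n0 true H2 /\ ecnt eU H2 = ecnt eU H | Fail => False end)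
    (NQ := fun H o => o = Res H).
  - apply safe_call.
    + intros H [phi [k [e [B [F [hn [he [hs hr]]]]]]]] rl H' hin happ. apply in1 in hin; subst rl.
      destruct (step_reduce _ _ _ _ _ _ B happ) as [e1 [s [t [he1 [_ [_ [h1 [h2 [hlt _]]]]]]]]].
      exists e1. split; auto. exists s, t. auto.
    + intros H [phi [k [e [B [F [hn [he [hs hr]]]]]]]] hfail e' he' hr' [s [t [h1 [h2 hlt]]]].
      pose proof (b_red _ _ _ _ _ B e' he' hr') as hro. inversion hro.
      destruct (app_reduce _ _ _ _ _ _ s t B he' (eq_sym H1) hr' h1 h2 hlt) as [H' ha].
      apply (hfail r_reduce H'); simpl; auto.
  - apply safe_call.
    + intros H [[phi [k [e [B [F [hn [he [hs hr]]]]]]]] [_ [e1 [he1 hred]]]] rl H' hin happ.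
      apply in1 in hin; subst rl.
      destruct (step_setflag _ _ _ _ _ _ B happ) as [-> B'].
      split; [|reflexivity]. exists phi, (-1), e. split; auto. split; [|auto].
      constructor; auto. intros; eauto.
    + intros H [[phi [k [e [B [F [hn [he [hs hr]]]]]]]] _] hfail.
      eapply (hfail r_set_flag _ (or_introl eq_refl)). eapply app_setflag; eauto.
  - apply safe_skip.
  - intros H o _ _ h; exact h.
  - intros H o [phi [k [e [B [F [hn [he [hs hr]]]]]]]] hf ->. split; auto.
    exists phi, k, e. split; auto. split; auto.
    destruct F; constructor; auto. intros e' he' hr' _ hred. exfalso; apply (hf e' he' hr' hred).
Qed.

Lemma safe_FBody D u n0 : safe FBody (FEI D u n0)
  (fun H o => match o with Res H1 => FEI D u n0 H1 /\ (ecnt eU H1 < ecnt eU H)%nat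
   | Fail => forall e, In e (gE G) -> src G e = u -> emk H e <> EUnmarked end).
Proof.
  eapply safe_seq2 with
    (M := fun H o => match o with Res H1 => FMid D u n0 false H1 /\ (ecnt eU H1 < ecnt eU H)%nat
          | Fail => forall e, In e (gE G) -> src G e = u -> emk H e <> EUnmarked end)
    (MidP := FMid D u n0 false)
    (N := fun H1 o => match o with Res H2 => FEI D u n0 H2 /\ (ecnt eU H2 <= ecnt eU H1)%nat
          | Fail => False end).
  - apply safe_call.
    + intros H [phi [k [B [hnr [F hn]]]]] rl H' hin happ. apply in1 in hin; subst rl.
      destruct (step_umedge _ _ _ _ _ _ B hnr happ) as [e [he [hs [hm [-> B']]]]].
      split.
      * exists phi, k, e. split; auto. split.
        -- destruct F; constructor; simpl; auto.
           ++ intros e' he'. unfold upd. destruct (Nat.eqb_spec e' e); [discriminate|]. eauto.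
           ++ intros; discriminate.
        -- split; auto. split; auto. split; auto. simpl. unfold upd. rewrite Nat.eqb_refl. auto.
      * apply ecnt_emk_lt; auto; [|rewrite hm; auto].
        rewrite (sh_E _ _ _ _ (b_sh _ _ _ _ _ B)). right; auto.
    + intros H [phi [k [B [hnr [F hn]]]]] hfail e he hs hm.
      apply (hfail r_unmarked_edge (set_emk H e ERed)); [left; auto|].
      eapply app_umedge; eauto.
  - eapply safe_seq2 with
      (M := fun H1 o => match o with Res H2 => FMid D u n0 true H2 /\ ecnt eU H2 = ecnt eU H1
            | Fail => False end)
      (MidP := FMid D u n0 true)
      (N := fun H2 o => match o with Res H3 => FEI D u n0 H3 /\ (ecnt eU H3 <= ecnt eU H2)%nat
            | Fail => False end).
    + apply safe_FIf.
    + apply safe_call.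
      * intros H [phi [k [e [B [F [hn [he [hs hr]]]]]]]] rl H' hin happ. apply in1 in hin; subst rl.
        destruct (step_finish _ _ _ _ _ _ B happ) as [e1 [he1 [hs1 [hm1 [-> [B' hnr']]]]]].
        assert (e1 = e) by (apply (b_red1 _ _ _ _ _ B); auto). subst e1.
        split.
        -- exists phi, k. split; auto. split; auto. split; [|auto].
           destruct F as [f1 f2 f3 f4]; constructor; simpl; auto.
           ++ intros e' he'. unfold upd. destruct (Nat.eqb_spec e' e); subst; [intros _ hred; eapply f4; eauto|eauto].
           ++ intros e' he'. unfold upd. destruct (Nat.eqb_spec e' e); subst; [discriminate|eauto].
        -- apply ecnt_emk_le; auto.
      * intros H [phi [k [e [B [F [hn [he [hs hr]]]]]]]] hfail.
        apply (hfail r_finish (set_emk H e EBlue)); [left; auto|]. eapply app_finish; eauto.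
    + intros H H1 _ [h _]; exact h.
    + intros H _ [].
    + intros H H1 [H2|] _ [_ h1] h2; [|destruct h2]. destruct h2 as [h2 h3]. split; auto. lia.
  - intros H H1 _ [h _]; exact h.
  - intros H _ h; exact h.
  - intros H H1 [H2|] _ [_ h1] h2; [|destruct h2]. destruct h2 as [h2 h3]. split; auto. lia.
Qed.

Lemma safe_FEdge D u n0 : safe FEdge (FEI D u n0)
  (fun _ o => exists H1, o = Res H1 /\ FEI D u n0 H1 /\
     (forall e, In e (gE G) -> src G e = u -> emk H1 e <> EUnmarked)).
Proof. apply (safe_loop FBody (FEI D u n0) _ (ecnt eU)). apply safe_FBody. Qed.

Definition FI D H := exists phi k, Base k H phi D None /\ FinX H D k true.

Lemma safe_FOuter D : safe FOuter (FI D) (fun _ o => exists H1, o = Res H1 /\ FI D H1 /\ noblue H1).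
Proof.
  apply (safe_loop _ (FI D) _ (mcnt nB)).
  eapply safe_seq2 with
    (M := fun H o => match o with Res H1 => (exists u, FEI D u (mcnt nB H1) H1) /\ mcnt nB H1 = mcnt nB H
          | Fail => noblue H end)
    (MidP := fun H1 => exists u, FEI D u (mcnt nB H1) H1)
    (N := fun H1 o => match o with Res H2 => FI D H2 /\ (mcnt nB H2 < mcnt nB H1)%nat | Fail => False end).
  - apply safe_call.
    + intros H [phi [k [B F]]] rl H' hin happ. apply in1 in hin; subst rl.
      destruct (step_root1 _ _ _ _ _ B happ) as [v [hv [hb [-> B']]]].
      split; [|reflexivity]. exists v, phi, k. split; auto. split; [apply (base_nored _ _ _ _ B)|].
      split; auto. eapply fx_same; eauto.
    + intros H _ hfail x hx hb. eapply (hfail r_root1 _ (or_introl eq_refl)). apply app_root1; eauto.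
  - intros H1 [u hI]. revert H1 hI.
    assert (forall n0, safe (Seq FEdge (Call [r_unroot1])) (FEI D u n0)
      (fun _ o => match o with Res H2 => FI D H2 /\ (mcnt nB H2 < n0)%nat | Fail => False end)).
    { intros n0. eapply safe_seq2 with
        (MidP := fun H1 => FEI D u n0 H1 /\ (forall e, In e (gE G) -> src G e = u -> emk H1 e <> EUnmarked))
        (N := fun H1 o => match o with Res H2 => FI D H2 /\ (mcnt nB H2 < n0)%nat | Fail => False end).
      - apply safe_FEdge.
      - apply safe_call.
        + intros H [[phi [k [B [hnr [F hn]]]]] hall] rl H' hin happ. apply in1 in hin; subst rl.
          assert (hb : forall e, In e (gE G) -> src G e = u -> emk H e = EBlue).
          { intros e he hs. destruct (b_em _ _ _ _ _ B e he) as [h|[h|h]]; auto.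
            - exfalso; apply (hall e he hs h).
            - exfalso; apply (hnr e he h). }
          destruct (step_unroot1 _ _ _ _ _ _ B hb happ) as [-> B'].
          split.
          * exists phi, k. split; auto. eapply fx_same; eauto.
          * subst n0. destruct (b_ro _ _ _ _ _ B u eq_refl) as [hu hbl].
            apply (mcnt_nmk_lt nB H (phi u) NGrey); auto.
            apply (sh_in _ _ _ _ (b_sh _ _ _ _ _ B)); auto. rewrite hbl; auto.
        + intros H [[phi [k [B [hnr [F hn]]]]] hall] hfail.
          eapply (hfail r_unroot1 _ (or_introl eq_refl)). eapply app_unroot1; eauto.
      - intros H H1 _ [H2 [e [h1 h2]]]. inversion e; subst; auto.
      - intros H _ [H2 [e _]]; discriminate.
      - intros H H1 o _ _ h; exact h. }
    intros H1 hI. destruct (H (mcnt nB H1) H1 hI) as [t o]. split; auto.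
  - intros H H1 _ [h _]; exact h.
  - intros H _ h; exact h.
  - intros H H1 [H2|] _ [_ h1] h2; [|destruct h2]. destruct h2 as [h2 h3]. split; auto. lia.
Qed.


Record Shape2 (H : graph) (phi : nat -> nat) (D : nat -> option Z) : Prop := {
  s2_E : forall e, In e (gE H) <-> In e (gE G);
  s2_src : src H = upd (src G) e0 c;
  s2_tgt : tgt H = upd (tgt G) e0 r;
  s2_elab : elab H = upd (elab G) e0 [];
  s2_emk : forall e, In e (gE G) -> emk H e = EBlue;
  s2_in : forall v, In v (gV G) -> In (phi v) (gV H);
  s2_lab : forall v, In v (gV G) -> nlab H (phi v) = nlab G v ++ [toatom (D v)];
  s2_inj : forall v w, In v (gV G) -> In w (gV G) -> phi v = phi w -> v = w;
  s2_cov : forall x, In x (gV H) -> exists v, In v (gV G) /\ phi v = x;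
  s2_fix : forall v, In v (gV G) -> fixedv v -> phi v = v;
  s2_root : forall v, In v (gV G) -> nroot H (phi v) = Nat.eqb v r;
  s2_nm : forall v, In v (gV G) -> nmk H (phi v) = NGrey \/ nmk H (phi v) = NUnmarked }.

Definition allfgrey H phi := forall v, In v (gV G) -> fixedv v -> nmk H (phi v) = NGrey.

Lemma shape2_delete k H phi D : Base k H phi D None -> allfgrey H phi -> noblue H ->
  Shape2 (set_nroot (del_node (del_edge H e0) c) r true) phi D.
Proof.
  intros B hfg hnb. pose proof (b_sh _ _ _ _ _ B) as S.
  assert (hpr : phi r = r) by (apply (sh_pr _ _ _ _ S)).
  constructor; simpl.
  - intros e. rewrite (sh_E _ _ _ _ S). split.
    + intros h. apply in_remove in h. destruct h as [[->|h] hne]; [congruence|auto].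
    + intros h. apply in_in_remove; [apply E_ne; auto|right; auto].
  - apply (sh_src _ _ _ _ S).
  - apply (sh_tgt _ _ _ _ S).
  - apply (sh_elab _ _ _ _ S).
  - intros e he. apply (b_eg _ _ _ _ _ B); auto. apply hfg; [apply E_src_in; auto|apply fix_src; auto].
  - intros v hv. apply in_in_remove; [apply (sh_nc _ _ _ _ S); auto|apply (sh_in _ _ _ _ S); auto].
  - apply (sh_lab _ _ _ _ S).
  - apply (sh_inj _ _ _ _ S).
  - intros x hx. apply in_remove in hx. destruct hx as [hx hxc].
    destruct (sh_cov _ _ _ _ S x hx) as [h|h]; [congruence|auto].
  - apply (sh_fix _ _ _ _ S).
  - intros v hv. unfold upd. rewrite <- hpr at 1.
    destruct (Nat.eqb_spec (phi v) (phi r)) as [h|h].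
    + apply (sh_inj _ _ _ _ S) in h; auto. subst v. rewrite Nat.eqb_refl; auto.
    + destruct (Nat.eqb_spec v r); [subst; congruence|].
      destruct (nroot H (phi v)) eqn:e; auto. apply (b_root _ _ _ _ _ B) in e; auto. discriminate.
  - intros v hv. destruct (b_nm _ _ _ _ _ B v hv) as [h|[h|h]]; auto.
    exfalso. apply (hnb (phi v)); auto. apply (sh_in _ _ _ _ S); auto.
Qed.

Lemma step_delete k H phi D H' : Base k H phi D None -> rule_app r_delete_counter H H' ->
  H' = set_nroot (del_node (del_edge H e0) c) r true.
Proof.
  intros B [v1 [v2 [e [hv1 [hv2 [hne [hg1 [hg2 [he [hs [ht [hm [hl [hd ->]]]]]]]]]]]]]].
  pose proof (b_sh _ _ _ _ _ B) as S.
  assert (e = e0).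
  { rewrite (sh_E _ _ _ _ S) in he. destruct he as [<-|he]; auto.
    exfalso. destruct (b_em _ _ _ _ _ B e he) as [h|[h|h]]; congruence. }
  subst e. rewrite (sh_src _ _ _ _ S) in hs. rewrite (sh_tgt _ _ _ _ S) in ht.
  unfold upd in hs, ht. rewrite Nat.eqb_refl in hs, ht. subst. auto.
Qed.

Lemma app_delete k H phi D : Base k H phi D None -> allfgrey H phi ->
  rule_app r_delete_counter H (set_nroot (del_node (del_edge H e0) c) r true).
Proof.
  intros B hfg. pose proof (b_sh _ _ _ _ _ B) as S.
  assert (hpr : phi r = r) by (apply (sh_pr _ _ _ _ S)).
  exists r, c, e0. repeat split.
  - rewrite <- hpr. apply (sh_in _ _ _ _ S); auto.
  - apply (sh_c _ _ _ _ S).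
  - intros h; apply Hc; rewrite <- h; auto.
  - rewrite <- hpr. apply hfg; auto. apply fix_r.
  - apply (sh_cmk _ _ _ _ S).
  - rewrite (sh_E _ _ _ _ S); left; auto.
  - rewrite (sh_src _ _ _ _ S). unfold upd; rewrite Nat.eqb_refl; auto.
  - rewrite (sh_tgt _ _ _ _ S). unfold upd; rewrite Nat.eqb_refl; auto.
  - apply (sh_emk0 _ _ _ _ S).
  - rewrite (sh_elab _ _ _ _ S). unfold upd; rewrite Nat.eqb_refl; auto.
  - intros e' he' hinc. rewrite (sh_E _ _ _ _ S) in he'. destruct he' as [<-|he']; auto.
    exfalso. rewrite (sh_srcH _ _ _ _ S), (sh_tgtH _ _ _ _ S) in hinc; auto.
    destruct hinc as [h|h]; [apply (sh_nc _ _ _ _ S (src G e')); [apply E_src_in; auto|auto]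
      |apply (sh_nc _ _ _ _ S (tgt G e')); [apply E_tgt_in; auto|auto]].
Qed.

Definition nounm H := forall x, In x (gV H) -> nmk H x <> NUnmarked.

Lemma safe_NDI D : safe (Loop (Call [r_no_deg_inv])) (fun H => exists phi, Shape2 H phi D)
  (fun _ o => exists H1, o = Res H1 /\ (exists phi, Shape2 H1 phi D) /\ nounm H1).
Proof.
  apply (safe_loop _ _ _ (mcnt nU)). apply safe_call.
  - intros H [phi S] rl H' hin happ. apply in1 in hin; subst rl.
    destruct happ as [x [hx [hu ->]]].
    destruct (s2_cov _ _ _ S x hx) as [v [hv <-]].
    split.
    + exists phi. destruct S; constructor; simpl; auto.
      intros w hw. unfold upd. destruct (Nat.eqb_spec (phi w) (phi v)); auto.
    + apply mcnt_nmk_lt; auto. rewrite hu; auto.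
  - intros H _ hfail x hx hu. apply (hfail r_no_deg_inv (set_nmk H x NGrey)); [left; auto|].
    exists x. auto.
Qed.

Definition FinalPost D (o : outcome) :=
  ((exists e, In e (gE G) /\ reducible D e) /\ o = Fail) \/
  ((~ exists e, In e (gE G) /\ reducible D e) /\ exists H', o = Res H' /\
     exists phi, Shape2 H' phi D /\ forall v, In v (gV G) -> nmk H' (phi v) = NGrey).

Definition FEnd D H := FI D H /\ noblue H.

Lemma fend_facts D H : FEnd D H -> exists phi k, Base k H phi D None /\ allfgrey H phi /\
  (k = -1 <-> exists e, In e (gE G) /\ reducible D e).
Proof.
  intros [[phi [k [B F]]] hnb]. pose proof (b_sh _ _ _ _ _ B) as S.
  assert (hfg : allfgrey H phi).
  { intros v hv hf. destruct (b_fix _ _ _ _ _ B v hv hf) as [h|h]; auto.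
    exfalso. apply (hnb (phi v)); auto. apply (sh_in _ _ _ _ S); auto. }
  exists phi, k. split; auto. split; auto. split.
  - apply (fx_kex _ _ _ _ F).
  - intros [e [he hr]]. apply (fx_blue _ _ _ _ F e he); auto.
    apply (b_eg _ _ _ _ _ B); auto. apply hfg; [apply E_src_in; auto|apply fix_src; auto].
Qed.

Lemma safe_Final D : safe Final (FI D) (fun _ o => FinalPost D o).
Proof.
  unfold Final. eapply safe_seq2 with (MidP := FEnd D)
    (N := fun _ o => FinalPost D o).
  - apply (safe_FOuter D).
  - eapply safe_seq2 with
      (M := fun H o => ((exists e, In e (gE G) /\ reducible D e) /\ o = Fail) \/
                       ((~ exists e, In e (gE G) /\ reducible D e) /\ o = Res H))
      (MidP := fun H => FEnd D H /\ ~ exists e, In e (gE G) /\ reducible D e)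
      (N := fun _ o => exists H', o = Res H' /\
         exists phi, Shape2 H' phi D /\ forall v, In v (gV G) -> nmk H' (phi v) = NGrey).
    + eapply safe_if with
        (MC := fun H o => match o with Res _ => exists e, In e (gE G) /\ reducible D e
               | Fail => ~ exists e, In e (gE G) /\ reducible D e end)
        (NP := fun _ o => o = Fail) (NQ := fun H o => o = Res H).
      * apply safe_call.
        -- intros H hE rl H' hin happ. apply in1 in hin; subst rl.
           destruct (fend_facts D H hE) as [phi [k [B [hfg hk]]]].
           destruct (step_flag _ _ _ _ _ _ B happ) as [-> _]. apply hk; auto.
        -- intros H hE hfail hex.
           destruct (fend_facts D H hE) as [phi [k [B [hfg hk]]]].
           apply hk in hex. subst k. eapply (hfail r_flag _ (or_introl eq_refl)).
           eapply app_flag; eauto.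
      * apply safe_failc.
      * apply safe_skip.
      * intros H o _ [H1 h] ->. left; auto.
      * intros H o _ h ->. right; auto.
    + eapply safe_seq2 with
        (M := fun H o => match o with Res H1 => exists phi, Shape2 H1 phi D | Fail => False end)
        (MidP := fun H1 => exists phi, Shape2 H1 phi D).
      * apply safe_call.
        -- intros H [hE _] rl H' hin happ. apply in1 in hin; subst rl.
           destruct (fend_facts D H hE) as [phi [k [B [hfg hk]]]].
           rewrite (step_delete _ _ _ _ _ B happ). exists phi. apply (shape2_delete k); auto.
           destruct hE; auto.
        -- intros H [hE _] hfail.
           destruct (fend_facts D H hE) as [phi [k [B [hfg hk]]]].
           eapply (hfail r_delete_counter _ (or_introl eq_refl)). eapply app_delete; eauto.
      * apply safe_NDI.
      * intros H H1 _ h; exact h.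
      * intros H _ [].
      * intros H H1 o _ _ [H2 [-> [[phi S] hnu]]]. exists H2. split; auto. exists phi. split; auto.
        intros v hv. destruct (s2_nm _ _ _ S v hv) as [h|h]; auto.
        exfalso. apply (hnu (phi v)); auto. apply (s2_in _ _ _ S); auto.
    + intros H H1 hE [[_ h]|[hn h]]; [discriminate|]. inversion h; subst. auto.
    + intros H _ [[h1 h2]|[_ h]]; [|discriminate]. left; auto.
    + intros H H1 o _ [[_ h]|[hn h]] hN; [discriminate|]. right. split; auto.
  - intros H H1 _ [H2 [e [h1 h2]]]. inversion e; subst. split; auto.
  - intros H _ [H2 [e _]]; discriminate.
  - intros H H1 o _ _ h; exact h.
Qed.


Lemma dpath_short q v : dpath G r q v -> (length q <= length (gV G) - 1)%nat.
Proof. intros h. pose proof (dpath_len G r q v Hwf Hr h). lia. Qed.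

Lemma math_noneg D : ~ neg_cycle_reachable G r -> Sound D -> Compl D (length (gV G) - 1) ->
  (~ exists e, In e (gE G) /\ reducible D e) /\
  (forall v, In v (gV G) -> reachable G r v -> exists d, D v = Some d /\ min_dist G r v d) /\
  (forall v, In v (gV G) -> ~ reachable G r v -> D v = None).
Proof.
  intros hneg hs hc. split; [|split].
  - intros [e [he [s [t [h1 [h2 hlt]]]]]].
    destruct (hs (src G e) s (E_src_in e he) h1) as [p [hp hw]].
    assert (hp' : walk G r (p ++ [e]) (tgt G e)).
    { apply walk_app. exists (src G e). split; auto. simpl; auto. }
    destruct (walk_dpath_le G r _ _ hneg hp') as [q [hq hqw]].
    pose proof (hc _ _ (proj1 hq) (dpath_short _ _ hq)) as h. rewrite h2 in h. simpl in h.
    rewrite weight_app in hqw. simpl in hqw. lia.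
  - intros v hv [q hq].
    pose proof (hc _ _ (proj1 hq) (dpath_short _ _ hq)) as h.
    destruct (D v) as [d|] eqn:hd; [|simpl in h; tauto].
    exists d. split; auto. split.
    + destruct (hs v d hv hd) as [p [hp hw]].
      destruct (walk_dpath_le G r _ _ hneg hp) as [q' [hq' hqw]].
      pose proof (hc _ _ (proj1 hq') (dpath_short _ _ hq')) as h'. rewrite hd in h'. simpl in h'.
      exists q'. split; auto. lia.
    + intros es hes. pose proof (hc _ _ (proj1 hes) (dpath_short _ _ hes)) as h'.
      rewrite hd in h'. auto.
  - intros v hv hnr. destruct (D v) as [d|] eqn:hd; auto. exfalso.
    destruct (hs v d hv hd) as [p [hp _]]. destruct (walk_dpath G r p v hp) as [q [hq _]].
    apply hnr. exists q; auto.
Qed.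

Lemma math_neg D : neg_cycle_reachable G r -> Compl D (length (gV G) - 1) ->
  exists e, In e (gE G) /\ reducible D e.
Proof.
  intros [u [cyc [[hne [hw hnd]] [hwt [q hq]]]]] hc.
  destruct (classic (exists e, In e (gE G) /\ reducible D e)) as [h|h]; auto. exfalso.
  assert (hsome : forall x p, walk G r p x -> exists z, D x = Some z).
  { intros x p hp. destruct (walk_dpath G r p x hp) as [q' [hq' _]].
    pose proof (hc _ _ (proj1 hq') (dpath_short _ _ hq')) as h'.
    destruct (D x); simpl in h'; [eauto|tauto]. }
  set (dz := fun v => match D v with Some z => z | None => 0 end).
  assert (hpot : forall e, In e cyc -> dz (tgt G e) <= dz (src G e) + ew G e).
  { intros e hin. destruct (walk_split_edge G u cyc u e hw hin) as [p1 [p2 [-> [h1 h2]]]].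
    assert (he : In e (gE G)) by (apply (walk_edges G u (p1 ++ e :: p2) u e hw hin)).
    assert (w1 : walk G r (q ++ p1) (src G e)) by (apply walk_app; exists u; split; auto; apply hq).
    assert (w2 : walk G r (q ++ p1 ++ [e]) (tgt G e)).
    { apply walk_app. exists u. split; [apply hq|]. apply walk_app. exists (src G e). split; auto.
      simpl; auto. }
    destruct (hsome _ _ w1) as [s hs1]. destruct (hsome _ _ w2) as [t ht1].
    unfold dz. rewrite hs1, ht1.
    destruct (Z_lt_ge_dec (s + ew G e) t) as [hlt|hge]; [|lia].
    exfalso. apply h. exists e. split; auto. exists s, t. auto. }
  pose proof (potential G dz u cyc u hw hpot). lia.
Qed.

Definition D0 (v : nat) : option Z := if Nat.eqb v r then Some 0 else None.

Record CntI (k : Z) (H : graph) : Prop := {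
  ci_V : gV H = c :: gV G;
  ci_E : gE H = e0 :: gE G;
  ci_src : src H = upd (src G) e0 c;
  ci_tgt : tgt H = upd (tgt G) e0 r;
  ci_elab : elab H = upd (elab G) e0 [];
  ci_emk0 : emk H e0 = EDashed;
  ci_emk : forall e, In e (gE G) -> emk H e = EUnmarked;
  ci_clab : nlab H c = [AInt k];
  ci_cmk : nmk H c = NGreen;
  ci_croot : nroot H c = false;
  ci_root : forall v, In v (gV G) -> nroot H v = false;
  ci_nodes : forall v, In v (gV G) -> (nmk H v = NGrey /\ nlab H v = nlab G v /\ v <> r) \/
     (nmk H v = NBlue /\ nlab H v = nlab G v ++ [toatom (D0 v)]);
  ci_cnt : Z.of_nat (length (filter (fun v => nG (nmk H v)) (gV G))) + k = nV - 1 }.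

Lemma vc v : In v (gV G) -> v <> c.
Proof. intros h ->; contradiction. Qed.

Lemma step_count k H H' : CntI k H -> rule_app r_count H H' ->
  exists v1, In v1 (gV G) /\ nmk H v1 = NGrey /\ CntI (k + 1) H' /\ (mcnt nG H' < mcnt nG H)%nat.
Proof.
  intros C [v1 [v2 [i [hv1 [hv2 [hne [hg [hgr [hl ->]]]]]]]]].
  rewrite (ci_V _ _ C) in hv1, hv2.
  destruct hv1 as [<-|hv1]; [rewrite (ci_cmk _ _ C) in hg; discriminate|].
  assert (v2 = c).
  { destruct hv2 as [<-|hv2]; auto. exfalso.
    destruct (ci_nodes _ _ C v2 hv2) as [[h _]|[h _]]; congruence. }
  subst v2. rewrite (ci_clab _ _ C) in hl. inversion hl; subst i.
  destruct (ci_nodes _ _ C v1 hv1) as [[_ [hl1 hr1]]|[h _]]; [|congruence].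
  assert (hv1c : v1 <> c) by (apply vc; auto).
  exists v1. split; auto. split; auto. split.
  - destruct C; constructor; simpl; auto.
    + unfold upd. rewrite Nat.eqb_refl. auto.
    + unfold upd. destruct (Nat.eqb_spec c v1); [congruence|auto].
    + intros v hv. assert (v <> c) by (apply vc; auto).
      unfold upd. destruct (Nat.eqb_spec v c); [congruence|].
      destruct (Nat.eqb_spec v v1) as [->|hvv]; [right; split; auto|].
      * rewrite hl1. unfold D0. destruct (Nat.eqb_spec v1 r); [congruence|auto].
      * apply ci_nodes0; auto.
    + rewrite <- ci_cnt0.
      assert (hd : NoDup (gV G)) by (destruct Hwf; auto).
      rewrite <- (filt_exact (fun v => nG (nmk H v)) (fun v => nG (upd (nmk H) v1 NBlue v)) (gV G) v1 hd hv1).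
      * lia.
      * rewrite hg; auto.
      * unfold upd; rewrite Nat.eqb_refl; auto.
      * intros y _ hy. unfold upd. destruct (Nat.eqb_spec y v1); [congruence|auto].
  - apply (mcnt_nmk_lt nG H v1 NBlue); [rewrite (ci_V _ _ C); right; auto|rewrite hg; auto|auto].
Qed.

Lemma app_count k H v : CntI k H -> In v (gV G) -> nmk H v = NGrey -> exists H', rule_app r_count H H'.
Proof.
  intros C hv hg. eexists. exists v, c, k. repeat split; auto.
  - rewrite (ci_V _ _ C); right; auto.
  - rewrite (ci_V _ _ C); left; auto.
  - apply vc; auto.
  - apply (ci_cmk _ _ C).
  - apply (ci_clab _ _ C).
Qed.

Lemma safe_count : safe (Loop (Call [r_count])) (fun H => exists k, CntI k H)
  (fun _ o => exists H1, o = Res H1 /\ (exists k, CntI k H1) /\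
     forall v, In v (gV G) -> nmk H1 v <> NGrey).
Proof.
  apply (safe_loop _ _ _ (mcnt nG)). apply safe_call.
  - intros H [k C] rl H' hin happ. apply in1 in hin; subst rl.
    destruct (step_count _ _ _ C happ) as [v1 [_ [_ [C' hlt]]]]. split; eauto.
  - intros H [k C] hfail v hv hg. destruct (app_count _ _ _ C hv hg) as [H' ha].
    apply (hfail r_count H'); [left; auto|auto].
Qed.

Lemma cnt_to_loop k H : CntI k H -> (forall v, In v (gV G) -> nmk H v <> NGrey) -> LoopI H.
Proof.
  intros C hng.
  assert (hall : forall v, In v (gV G) -> nmk H v = NBlue /\ nlab H v = nlab G v ++ [toatom (D0 v)]).
  { intros v hv. destruct (ci_nodes _ _ C v hv) as [[h _]|h]; auto. exfalso; apply (hng v hv h). }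
  assert (hcnt : filter (fun v => nG (nmk H v)) (gV G) = []).
  { apply filt_nil. intros v hv. destruct (hall v hv) as [h _]. rewrite h. auto. }
  pose proof (ci_cnt _ _ C) as hk. rewrite hcnt in hk. simpl in hk.
  assert (hS : Shape H (fun v => v) D0 k).
  { destruct C; constructor; auto.
    - rewrite ci_V0; left; auto.
    - intros v hv. rewrite ci_V0; right; auto.
    - intros v hv. apply vc; auto.
    - intros v hv. apply (hall v hv).
    - intros v hv. rewrite (proj1 (hall v hv)). discriminate.
    - intros x hx. rewrite ci_V0 in hx. destruct hx as [<-|hx]; [left|right]; eauto. }
  exists (fun v => v), D0, k, O. split; [|split; [|split; [|split; [|split]]]].
  - constructor; auto.
    + intros v hv. rewrite (proj1 (hall v hv)). auto.
    + intros v hv _. rewrite (proj1 (hall v hv)). auto.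
    + intros v hv. rewrite (ci_root _ _ C v hv). split; discriminate.
    + intros u hu; discriminate.
    + intros e he. rewrite (proj1 (hall (src G e) (E_src_in e he))). discriminate.
    + intros e he _ _. apply (ci_emk _ _ C); auto.
    + intros e he. left. apply (ci_emk _ _ C); auto.
    + intros e he. rewrite (ci_emk _ _ C); auto. discriminate.
    + intros e e' he _. rewrite (ci_emk _ _ C); auto. discriminate.
  - intros e he. apply (ci_emk _ _ C); auto.
  - intros v d hv hd. unfold D0 in hd. destruct (Nat.eqb_spec v r); [|discriminate].
    inversion hd; subst. exists []. simpl. auto.
  - intros v p hp hl. destruct p; [|simpl in hl; lia]. simpl in hp. subst v.
    unfold D0. rewrite Nat.eqb_refl. simpl. lia.
  - assert (0 < nV) by (unfold nV; destruct (gV G); [destruct Hr|simpl; lia]). lia.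
  - simpl. lia.
Qed.

Lemma loop_to_final H : LoopI H -> kstop H ->
  exists D, Sound D /\ Compl D (length (gV G) - 1) /\ FI D H.
Proof.
  intros [phi [D [k [np [B [hu [hs [hc [hk hn]]]]]]]]] hst.
  assert (k = 0).
  { pose proof (hst k (sh_clab _ _ _ _ (b_sh _ _ _ _ _ B))). lia. }
  subst k. assert (np = length (gV G) - 1)%nat by (unfold nV in hn; lia). subst np.
  exists D. split; auto. split; auto. exists phi, 0. split; auto.
  constructor; auto.
  - intros h; discriminate.
  - intros e he hb. rewrite hu in hb; auto. discriminate.
  - intros e he hb. rewrite hu in hb; auto. discriminate.
Qed.

Definition Rest := Seq (Loop (Call [r_count])) (Seq (Loop MBody) Final).

Lemma safe_Rest : safe Rest (fun H => exists k, CntI k H)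
  (fun _ o => exists D, Sound D /\ Compl D (length (gV G) - 1) /\ FinalPost D o).
Proof.
  eapply safe_seq2 with (MidP := fun H1 => (exists k, CntI k H1) /\ forall v, In v (gV G) -> nmk H1 v <> NGrey)
    (N := fun _ o => exists D, Sound D /\ Compl D (length (gV G) - 1) /\ FinalPost D o).
  - apply safe_count.
  - eapply safe_seq2 with (MidP := fun H1 => LoopI H1 /\ kstop H1)
      (N := fun _ o => exists D, Sound D /\ Compl D (length (gV G) - 1) /\ FinalPost D o).
    + eapply safe_conseq; [apply safe_MainLoop| |].
      * intros H [[k C] hng]. eapply cnt_to_loop; eauto.
      * intros H o _ h; exact h.
    + intros H [hL hst]. destruct (loop_to_final H hL hst) as [D [hs [hc hF]]].
      destruct (safe_Final D H hF) as [t o]. split; auto. intros o' hx. exists D. auto.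
    + intros H H1 _ [H2 [e [h1 h2]]]. inversion e; subst. auto.
    + intros H _ [H2 [e _]]; discriminate.
    + intros H H1 o _ _ h; exact h.
  - intros H H1 _ [H2 [e [h1 h2]]]. inversion e; subst. auto.
  - intros H _ [H2 [e _]]; discriminate.
  - intros H H1 o _ _ h; exact h.
Qed.

End Cnt.

Definition psi (phi : nat -> nat) (x : nat) : nat :=
  match find (fun v => Nat.eqb (phi v) x) (gV G) with Some v => v | None => x end.

Lemma psi_spec (phi : nat -> nat) x : (exists v, In v (gV G) /\ phi v = x) ->
  In (psi phi x) (gV G) /\ phi (psi phi x) = x.
Proof.
  intros [v [hv hx]]. unfold psi.
  destruct (find (fun v => Nat.eqb (phi v) x) (gV G)) as [w|] eqn:hf.
  - apply find_some in hf. destruct hf as [h1 h2]. apply Nat.eqb_eq in h2. auto.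
  - exfalso. pose proof (find_none _ _ hf v hv) as h. simpl in h. apply Nat.eqb_neq in h. auto.
Qed.

Lemma build_result c e0 H phi D : ~ In e0 (gE G) -> Shape2 c e0 H phi D ->
  (forall v, In v (gV G) -> nmk H (phi v) = NGrey) ->
  Sound D -> Compl D (length (gV G) - 1) -> ~ neg_cycle_reachable G r ->
  exists H0, bf_result G r H0 /\ iso H H0.
Proof.
  intros He0 S hgr hs hc hneg.
  destruct (math_noneg D hneg hs hc) as [_ [hreach hunr]].
  assert (hps : forall x, In x (gV H) -> In (psi phi x) (gV G) /\ phi (psi phi x) = x).
  { intros x hx. apply psi_spec. apply (s2_cov _ _ _ _ _ S); auto. }
  assert (hpsi_phi : forall v, In v (gV G) -> psi phi (phi v) = v).
  { intros v hv. destruct (hps (phi v) (s2_in _ _ _ _ _ S v hv)) as [h1 h2].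
    apply (s2_inj _ _ _ _ _ S); auto. }
  assert (hEne : forall e, In e (gE G) -> e <> e0) by (intros e he ->; contradiction).
  exists (mkGraph (gV G) (gE G) (fun v => nlab G v ++ [toatom (D v)]) (fun _ => NGrey)
        (fun v => Nat.eqb v r) (src G) (tgt G) (elab G) (fun _ => EBlue)). split.
  - unfold bf_result. simpl. split; auto. split; auto. split.
    + intros e he. repeat split; auto.
    + intros v hv. split; [symmetry; apply Hgrey; auto|]. split.
      * destruct (Nat.eqb_spec v r) as [->|hne]; [rewrite Hrr; auto|].
        destruct (nroot G v) eqn:e; [exfalso; apply hne; apply Hroot; auto|auto].
      * split.
        -- intros hr. destruct (hreach v hv hr) as [d [hd hm]]. exists d. split; auto.
           rewrite hd. auto.
        -- intros hr. rewrite (hunr v hv hr). auto.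
  - exists (psi phi), (fun e => e). split; [|split; [|split; [|split; [|split; [|split; [|split]]]]]].
    + intros x hx. simpl. apply (hps x hx).
    + intros x y hx hy h. destruct (hps x hx) as [_ h1]. destruct (hps y hy) as [_ h2]. congruence.
    + intros v hv. simpl in hv. exists (phi v). split; [apply (s2_in _ _ _ _ _ S); auto|auto].
    + intros e he. simpl. apply (s2_E _ _ _ _ _ S); auto.
    + auto.
    + intros e he. exists e. split; auto. apply (s2_E _ _ _ _ _ S); auto.
    + intros e he. apply (s2_E _ _ _ _ _ S) in he. simpl.
      rewrite (s2_src _ _ _ _ _ S), (s2_tgt _ _ _ _ _ S), (s2_elab _ _ _ _ _ S), (s2_emk _ _ _ _ _ S); auto.
      unfold upd. destruct (Nat.eqb_spec e e0) as [h|h]; [exfalso; apply (hEne e he h)|].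
      pose proof (hpsi_phi (src G e) (E_src_in e he)) as hp1.
      rewrite (s2_fix _ _ _ _ _ S (src G e) (E_src_in e he) (fix_src e he)) in hp1.
      pose proof (hpsi_phi (tgt G e) (E_tgt_in e he)) as hp2.
      rewrite (s2_fix _ _ _ _ _ S (tgt G e) (E_tgt_in e he) (fix_tgt e he)) in hp2.
      rewrite hp1, hp2. auto.
    + intros x hx. simpl. destruct (hps x hx) as [h1 h2].
      remember (psi phi x) as w. clear Heqw. subst x.
      rewrite (s2_lab _ _ _ _ _ S), (s2_root _ _ _ _ _ S), hgr; auto.
Qed.


Lemma sc_cnt H1 : rule_app r_set_counter G H1 ->
  exists c e0, ~ In c (gV G) /\ ~ In e0 (gE G) /\ CntI c e0 0 H1.
Proof.
  intros [v [c [e [hv [hg [hrt [hc [he ->]]]]]]]].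
  assert (v = r) by (apply Hroot; auto). subst v.
  assert (hvc : forall v, In v (gV G) -> v <> c) by (intros v' hv' ->; contradiction).
  exists c, e. split; auto. split; auto. constructor; simpl; auto.
  - unfold upd; rewrite Nat.eqb_refl; auto.
  - intros e' he'. unfold upd. destruct (Nat.eqb_spec e' e); [subst; contradiction|auto].
  - unfold upd; rewrite Nat.eqb_refl; auto.
  - unfold upd; rewrite Nat.eqb_refl; auto.
  - unfold upd; rewrite Nat.eqb_refl; auto.
  - intros w hw. unfold upd. destruct (Nat.eqb_spec w c); [exfalso; apply (hvc w hw); auto|].
    destruct (Nat.eqb_spec w r) as [hwr|hwr]; auto. destruct (nroot G w) eqn:h; auto.
    exfalso; apply hwr; apply Hroot; auto.
  - intros w hw. unfold upd. destruct (Nat.eqb_spec w c); [exfalso; apply (hvc w hw); auto|].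
    destruct (Nat.eqb_spec w r) as [->|hne].
    + right. split; auto. unfold D0. rewrite Nat.eqb_refl. auto.
    + left. split; auto.
  - assert (hd : NoDup (gV G)) by (destruct Hwf; auto).
    pose proof (filt_exact (fun _ => true)
       (fun v => nG (upd (upd (nmk G) r NBlue) c NGreen v)) (gV G) r hd Hr eq_refl) as h.
    rewrite filt_true in h. unfold nV. rewrite <- h.
    + rewrite Nat2Z.inj_succ. lia.
    + unfold upd. destruct (Nat.eqb_spec r c); [exfalso; apply (hvc r Hr); auto|].
      rewrite Nat.eqb_refl. auto.
    + intros y hy hyr. unfold upd. destruct (Nat.eqb_spec y c); [exfalso; apply (hvc y hy); auto|].
      destruct (Nat.eqb_spec y r); [contradiction|]. rewrite Hgrey; auto.
Qed.

Lemma safe_Main_sec : safe Main (fun H => H = G) (fun _ o => exists c e0, ~ In c (gV G) /\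
  ~ In e0 (gE G) /\ exists D, Sound D /\ Compl D (length (gV G) - 1) /\ FinalPost c e0 D o).
Proof.
  unfold Main. eapply safe_seq2 with
    (M := fun _ o => match o with Res H1 => exists c e0, ~ In c (gV G) /\ ~ In e0 (gE G) /\ CntI c e0 0 H1
          | Fail => False end)
    (MidP := fun H1 => exists c e0, ~ In c (gV G) /\ ~ In e0 (gE G) /\ CntI c e0 0 H1)
    (N := fun _ o => exists c e0, ~ In c (gV G) /\
      ~ In e0 (gE G) /\ exists D, Sound D /\ Compl D (length (gV G) - 1) /\ FinalPost c e0 D o).
  - apply safe_call.
    + intros H -> rl H' hin happ. apply in1 in hin; subst rl. apply sc_cnt; auto.
    + intros H -> hfail. destruct (fresh_nat (gV G)) as [c hc]. destruct (fresh_nat (gE G)) as [e he].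
      eapply (hfail r_set_counter _ (or_introl eq_refl)).
      exists r, c, e. repeat split; eauto.
  - intros H1 [c [e0 [hc [he C]]]].
    destruct (safe_Rest c e0 hc he H1 (ex_intro _ 0 C)) as [t o]. split; auto.
    intros o' hx. exists c, e0. auto.
  - intros H H1 _ h; exact h.
  - intros H _ [].
  - intros H H1 o _ _ h; exact h.
Qed.

End Main.

Close Scope Z_scope.

Theorem mainTheorem7 (G : graph) (r : nat) :
  wf G ->
  (forall v, In v (gV G) -> nmk G v = NGrey) ->
  In r (gV G) -> nroot G r = true ->
  (forall v, In v (gV G) -> nroot G v = true -> v = r) ->
  (forall e, In e (gE G) -> emk G e = EUnmarked /\ exists w, elab G e = [AInt w]) ->
  (forall e, In e (gE G) -> src G e <> tgt G e) ->
  terminates Main G /\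
  (neg_cycle_reachable G r ->
     exec Main G Fail /\ (forall o, exec Main G o -> o = Fail)) /\
  (~ neg_cycle_reachable G r ->
     (exists H, exec Main G (Res H)) /\
     (forall o, exec Main G o ->
        exists H H0, o = Res H /\ bf_result G r H0 /\ iso H H0)).
Proof.
  intros hwf hgrey hr hrr hroot hedges hnl.
  assert (hel : forall e, In e (gE G) -> elab G e = [AInt (ew G e)]).
  { intros e he. destruct (hedges e he) as [_ [w hw]]. unfold ew. rewrite hw. auto. }
  assert (hunm : forall e, In e (gE G) -> emk G e = EUnmarked) by (intros e he; apply hedges; auto).
  pose proof (safe_Main_sec G r hwf hr hnl hel hgrey hroot hunm hrr G eq_refl) as [ht hout].
  split; [exact ht|]. split.
  - intros hneg.
    assert (hall : forall o, exec Main G o -> o = Fail).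
    { intros o hx. destruct (hout o hx) as [c [e0 [hc [he [D [hs [hc' hF]]]]]]].
      destruct hF as [[_ h]|[hn _]]; auto. exfalso. apply hn. eapply math_neg; eauto. }
    split; auto. destruct (term_exec _ _ ht) as [o hx]. rewrite (hall o hx) in hx. auto.
  - intros hneg.
    assert (hall : forall o, exec Main G o -> exists H H0, o = Res H /\ bf_result G r H0 /\ iso H H0).
    { intros o hx. destruct (hout o hx) as [c [e0 [hc [he [D [hs [hc' hF]]]]]]].
      destruct hF as [[hex _]|[_ [H' [-> [phi [S hg]]]]]].
      - exfalso. destruct (math_noneg G r hwf hr D hneg hs hc') as [h _]. auto.
      - destruct (build_result G r hwf hr hgrey hroot hrr c e0 H' phi D he S hg hs hc' hneg) as [H0 [h1 h2]].
        exists H', H0. auto. }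
    split; auto. destruct (term_exec _ _ ht) as [o hx]. destruct (hall o hx) as [H [H0 [-> _]]]. eauto.
Qed.
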